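(* Let $X$ and $Y$ be random variables taking values in the non-negative integers with zero-inflated marginal cdfs $F(s)=(1-\pi_F)+\pi_F\bar F(s)$ and $G(t)=(1-\pi_G)+\pi_G\bar G(t)$ for $s,t\ge0$ (zero for negative arguments), where $\bar F,\bar G$ are discrete distribution functions. Let $p_1=\mathbb{P}[X=0]=F(0)$ and $p_2=\mathbb{P}[Y=0]=G(0)$. For a joint distribution $H$ of $(X,Y)$ with these marginals, let $\tau_A$ denote Kendall's $\tau$ of $(X,Y)$, i.e. $\tau_A=\mathbb{P}[(\tilde X_1-\tilde X_2)(\tilde Y_1-\tilde Y_2)>0]-\mathbb{P}[(\tilde X_1-\tilde X_2)(\tilde Y_1-\tilde Y_2)<0]$ for two independent copies $(\tilde X_1,\tilde Y_1),(\tilde X_2,\tilde Y_2)$ of $(X,Y)$. Let $\tilde s$ be a point with $F(\tilde s)>p_2$ and $F(\tilde s-1)\le p_2$; $\tilde t$ a point with $G(\tilde t)>p_1$ and $G(\tilde t-1)\le p_1$; $\tilde s'$ a point with $F(\tilde s')+p_2-1>0$ and $F(\tilde s'-1)+p_2-1\le 0$; $\tilde t'$ a point with $G(\tilde t')+p_1-1>0$ and $G(\tilde t'-1)+p_1-1\le0$. Let $p^U_{t_{11}}$ (resp. $p^L_{t_{11}}$) be the probability that, for two independent copies of $(X,Y)$ conditioned on $\{X>0,Y>0\}$, the $X$-components or the $Y$-components are tied, when $H$ is the upper Fréchet–Hoeffding bound $H(x,y)=\min\{F(x),G(y)\}$ (resp. the lower Fréchet–Hoeffding bound $H(x,y)=\max\{F(x)+G(y)-1,0\}$).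 Then, over joint distributions $H$ with marginals $F$ and $G$, the upper and lower bounds of $\tau_A$ are $$\tau_A^{upper}=\begin{cases}(1-p_2^2)-(1-p_2)^2p^U_{t_{11}}-2(p_2-F(\tilde s-1))(F(\tilde s)-p_2), & p_1\le p_2,\\ (1-p_1^2)-(1-p_1)^2p^U_{t_{11}}-2(p_1-G(\tilde t-1))(G(\tilde t)-p_1), & p_1\ge p_2,\end{cases}$$ $$\tau_A^{lower}=\begin{cases}-2(1-p_1)(1-p_2), & 1-p_1-p_2<0,\\ p_1^2+p_2^2-1+(1-p_1-p_2)^2p^L_{t_{11}}+2\big[(F(\tilde s')+p_2-1)(1-p_2-F(\tilde s'-1))+(G(\tilde t')+p_1-1)(1-p_1-G(\tilde t'-1))\big], & 1-p_1-p_2>0.\end{cases}$$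
   Context: The upper Fréchet–Hoeffding bound $\min\{F(x),G(y)\}$ and lower bound $\max\{F(x)+G(y)-1,0\}$ are the pointwise maximal and minimal joint cdfs with marginals $F$ and $G$. *)

(* Defs.v *)
From Stdlib Require Import Reals ZArith Bool.
From Coquelicot Require Import Coquelicot.
Open Scope R_scope.

Definition is_pmf (f : nat -> R) : Prop :=
  (forall k, 0 <= f k) /\ is_series f 1.

Definition cdf_of_pmf (f : nat -> R) (s : Z) : R :=
  if (s <? 0)%Z then 0 else sum_n f (Z.to_nat s).

Definition zi_cdf (pi : R) (Fbar : Z -> R) (s : Z) : R :=
  if (s <? 0)%Z then 0 else (1 - pi) + pi * Fbar s.

Definition is_joint_pmf (h : nat -> nat -> R) (F G : Z -> R) : Prop :=
  (forall x y, 0 <= h x y) /\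
  (forall x, is_series (fun y => h x y)
               (F (Z.of_nat x) - F (Z.of_nat x - 1)%Z)) /\
  (forall y, is_series (fun x => h x y)
               (G (Z.of_nat y) - G (Z.of_nat y - 1)%Z)).

Definition prob2 (h : nat -> nat -> R) (E : nat -> nat -> nat -> nat -> bool) : R :=
  Series (fun x1 => Series (fun y1 => Series (fun x2 => Series (fun y2 =>
    if E x1 y1 x2 y2 then h x1 y1 * h x2 y2 else 0)))).

Definition concordant (x1 y1 x2 y2 : nat) : bool :=
  (0 <? (Z.of_nat x1 - Z.of_nat x2) * (Z.of_nat y1 - Z.of_nat y2))%Z.

Definition discordant (x1 y1 x2 y2 : nat) : bool :=
  ((Z.of_nat x1 - Z.of_nat x2) * (Z.of_nat y1 - Z.of_nat y2) <? 0)%Z.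

Definition kendall_tau_A (h : nat -> nat -> R) : R :=
  prob2 h concordant - prob2 h discordant.

Definition pmf_of_cdf2 (C : Z -> Z -> R) (x y : nat) : R :=
  let s := Z.of_nat x in let t := Z.of_nat y in
  C s t - C (s - 1)%Z t - C s (t - 1)%Z + C (s - 1)%Z (t - 1)%Z.

Definition frechet_upper (F G : Z -> R) (s t : Z) : R := Rmin (F s) (G t).
Definition frechet_lower (F G : Z -> R) (s t : Z) : R := Rmax (F s + G t - 1) 0.

Definition both_pos (x1 y1 x2 y2 : nat) : bool :=
  (0 <? x1)%nat && (0 <? y1)%nat && (0 <? x2)%nat && (0 <? y2)%nat.

Definition tie (x1 y1 x2 y2 : nat) : bool :=
  Nat.eqb x1 x2 || Nat.eqb y1 y2.

Definition cond_tie_prob (h : nat -> nat -> R) : R :=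
  prob2 h (fun x1 y1 x2 y2 => both_pos x1 y1 x2 y2 && tie x1 y1 x2 y2)
  / prob2 h both_pos.

Definition tau_A_max (F G : Z -> R) (v : R) : Prop :=
  (forall h, is_joint_pmf h F G -> kendall_tau_A h <= v) /\
  (exists h, is_joint_pmf h F G /\ kendall_tau_A h = v).

Definition tau_A_min (F G : Z -> R) (v : R) : Prop :=
  (forall h, is_joint_pmf h F G -> v <= kendall_tau_A h) /\
  (exists h, is_joint_pmf h F G /\ kendall_tau_A h = v).

(* Main.v *)
Require Import Defs.
From Stdlib Require Import Reals ZArith Lra Lia Bool FunctionalExtensionality.
From Coquelicot Require Import Coquelicot.
Open Scope R_scope.

Lemma sumS (a : nat -> R) n : sum_n a (S n) = sum_n a n + a (S n) :> R.
Proof. rewrite sum_Sn. reflexivity. Qed.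

Lemma sum0 (a : nat -> R) : sum_n a 0 = a 0%nat :> R.
Proof. apply sum_O. Qed.

Lemma sum_ext' (a b : nat -> R) N : (forall n, a n = b n) -> sum_n a N = sum_n b N :> R.
Proof. intro H; apply sum_n_ext; exact H. Qed.

Lemma sum_le' (a b : nat -> R) N : (forall n, a n <= b n) -> sum_n a N <= sum_n b N.
Proof. intro H; induction N. rewrite !sum0; auto. rewrite !sumS. specialize (H (S N)); lra. Qed.

Lemma sum_nonneg (a : nat -> R) N : (forall n, 0 <= a n) -> 0 <= sum_n a N.
Proof. intro H; induction N. rewrite sum0; auto. rewrite sumS. specialize (H (S N)); lra. Qed.

Lemma sum_mono (a : nat -> R) N M : (forall n, 0 <= a n) -> (N <= M)%nat -> sum_n a N <= sum_n a M.
Proof. intros H HNM; induction HNM. lra. rewrite sumS. specialize (H (S m)); lra. Qed.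

Lemma sum_plus' (a b : nat -> R) N : sum_n (fun n => a n + b n) N = sum_n a N + sum_n b N :> R.
Proof. induction N. rewrite !sum0; reflexivity. rewrite !sumS, IHN; try ring. Qed.

Lemma sum_scal' (c : R) (a : nat -> R) N : sum_n (fun n => c * a n) N = c * sum_n a N :> R.
Proof. induction N. rewrite !sum0; reflexivity. rewrite !sumS, IHN; try ring. Qed.

Lemma sum_const0 N : sum_n (fun _ : nat => 0) N = 0 :> R.
Proof. induction N. rewrite sum0; auto. rewrite sumS, IHN; ring. Qed.

Lemma sum_term_le (a : nat -> R) N : (forall n, 0 <= a n) -> a N <= sum_n a N.
Proof. intro H. destruct N. rewrite sum0; lra. rewrite sumS. pose proof (sum_nonneg a N H). lra. Qed.

Lemma ser_lim a l : is_series a l <-> is_lim_seq (sum_n a) l.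
Proof. split; intro H; exact H. Qed.

Lemma ser_bnd (a : nat -> R) B : (forall n, 0 <= a n) -> (forall N, sum_n a N <= B) ->
  ex_series a /\ Series a <= B.
Proof.
  intros H HB.
  assert (Hinc : forall n, sum_n a n <= sum_n a (S n)).
  { intro n. rewrite sumS. specialize (H (S n)). lra. }
  destruct (ex_finite_lim_seq_incr _ _ Hinc HB) as [l Hl].
  assert (Hs : is_series a l) by (apply ser_lim; exact Hl).
  split. exists l; exact Hs.
  rewrite (is_series_unique _ _ Hs).
  assert (Hc : is_lim_seq (fun _ : nat => B) B) by apply is_lim_seq_const.
  apply (is_lim_seq_le _ _ _ _ (fun n => HB n) Hl Hc).
Qed.

Lemma ser_psum (a : nat -> R) : (forall n, 0 <= a n) -> ex_series a -> forall N, sum_n a N <= Series a.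
Proof.
  intros H [l Hl] N. rewrite (is_series_unique _ _ Hl).
  apply (is_lim_seq_incr_compare (sum_n a)). apply ser_lim; exact Hl.
  intro n. rewrite sumS. specialize (H (S n)). lra.
Qed.

Lemma ser_ge0 (a : nat -> R) : (forall n, 0 <= a n) -> ex_series a -> 0 <= Series a.
Proof. intros H E. pose proof (ser_psum a H E 0). pose proof (sum_nonneg a 0 H). lra. Qed.

Lemma ser_term_le (a : nat -> R) : (forall n, 0 <= a n) -> ex_series a -> forall n, a n <= Series a.
Proof. intros H E n. pose proof (ser_psum a H E n). pose proof (sum_term_le a n H). lra. Qed.

Lemma ser_cmp (a b : nat -> R) : (forall n, 0 <= a n <= b n) -> ex_series b -> ex_series a.
Proof.
  intros H E. apply (ex_series_le a b); auto. intro n. unfold norm; simpl.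
  specialize (H n). unfold abs; simpl. rewrite Rabs_pos_eq; lra.
Qed.

Lemma ser_le' (a b : nat -> R) : (forall n, 0 <= a n <= b n) -> ex_series b -> Series a <= Series b.
Proof. intros; apply Series_le; auto. Qed.

Lemma ser_fin (a : nat -> R) N : (forall n, (N < n)%nat -> a n = 0) -> is_series a (sum_n a N).
Proof.
  intro H. apply ser_lim.
  apply is_lim_seq_ext_loc with (fun _ => sum_n a N).
  exists N. intros n Hn. induction Hn. reflexivity. change (sum_n a N = sum_n a (S m) :> R). rewrite sumS, H by lia. rewrite Rplus_0_r. exact IHHn.
  apply is_lim_seq_const.
Qed.

Lemma sum_single (v : R) k N : sum_n (fun n => if Nat.eqb n k then v else 0) N = (if Nat.leb k N then v else 0) :> R.
Proof.
  induction N.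
  - rewrite sum0. destruct k; reflexivity.
  - rewrite sumS, IHN. destruct (Nat.leb_spec k N); destruct (Nat.leb_spec k (S N));
    destruct (Nat.eqb_spec (S N) k); try lia; subst; ring.
Qed.

Lemma ser_single (v : R) k : is_series (fun n => if Nat.eqb n k then v else 0) v.
Proof.
  pose proof (ser_fin (fun n => if Nat.eqb n k then v else 0) k) as H.
  rewrite sum_single, Nat.leb_refl in H. apply H.
  intros n Hn. destruct (Nat.eqb_spec n k); [lia|reflexivity].
Qed.

Lemma Ser_single (v : R) k : Series (fun n => if Nat.eqb n k then v else 0) = v.
Proof. apply is_series_unique, ser_single. Qed.

Lemma ex_plus' (a b : nat -> R) : ex_series a -> ex_series b -> ex_series (fun n => a n + b n).
Proof. intros A B. apply (ex_series_ext (fun n => plus (a n) (b n))). intro; reflexivity. apply (@ex_series_plus R_AbsRing R_NormedModule); auto. Qed.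

Lemma ex_scal' (c : R) (a : nat -> R) : ex_series a -> ex_series (fun n => c * a n).
Proof. intros A. apply (ex_series_ext (fun n => scal c (a n))). intro; reflexivity. apply (@ex_series_scal R_AbsRing R_NormedModule); auto. Qed.

Lemma sum_series (a : nat -> nat -> R) N : (forall i, ex_series (a i)) ->
  ex_series (fun j => sum_n (fun i => a i j) N) /\
  Series (fun j => sum_n (fun i => a i j) N) = sum_n (fun i => Series (a i)) N.
Proof.
  intro H. induction N.
  - split. apply (ex_series_ext (a 0%nat)). intro; rewrite sum0; reflexivity. auto.
    rewrite sum0. apply Series_ext. intro; rewrite sum0; reflexivity.
  - destruct IHN as [E SS].
    assert (Eq : forall j, sum_n (fun i => a i j) (S N) = sum_n (fun i => a i j) N + a (S N) j).
    { intro j. rewrite sumS. reflexivity. }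
    split. apply (ex_series_ext (fun j => sum_n (fun i => a i j) N + a (S N) j)).
    intro j; rewrite Eq; reflexivity. apply ex_plus'; auto.
    rewrite (Series_ext _ _ Eq). rewrite Series_plus; auto. rewrite SS, sumS. reflexivity.
Qed.

Lemma fubini2 (a : nat -> nat -> R) : (forall i j, 0 <= a i j) ->
  (forall i, ex_series (a i)) -> ex_series (fun i => Series (a i)) ->
  (forall j, ex_series (fun i => a i j)) /\ ex_series (fun j => Series (fun i => a i j)) /\
  Series (fun j => Series (fun i => a i j)) = Series (fun i => Series (a i)).
Proof.
  intros P Ei Eo.
  set (L := Series (fun i => Series (a i))).
  assert (Si : forall i, 0 <= Series (a i)) by (intro; apply ser_ge0; auto).
  assert (Ej : forall j, ex_series (fun i => a i j)).
  { intro j. apply (ser_bnd _ L). auto. intro N.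
    apply Rle_trans with (sum_n (fun i => Series (a i)) N).
    apply sum_le'. intro i. apply ser_term_le; auto.
    apply ser_psum; auto. }
  assert (Sj : forall j, 0 <= Series (fun i => a i j)) by (intro; apply ser_ge0; auto).
  assert (B1 : forall M, sum_n (fun j => Series (fun i => a i j)) M <= L).
  { intro M. destruct (sum_series (fun j i => a i j) M Ej) as [E1 S1].
    rewrite <- S1. apply Series_le; auto. intro i. split. apply sum_nonneg; auto.
    apply ser_psum; auto. }
  destruct (ser_bnd _ L Sj B1) as [Eo' L1].
  assert (B2 : forall N, sum_n (fun i => Series (a i)) N <= Series (fun j => Series (fun i => a i j))).
  { intro N. destruct (sum_series a N Ei) as [E1 S1]. rewrite <- S1.
    apply Series_le; auto. intro j. split. apply sum_nonneg; auto.
    apply (ser_psum (fun i => a i j)); auto. }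
  destruct (ser_bnd _ _ Si B2) as [_ L2].
  split; auto. split; auto. fold L in L2. lra.
Qed.

Definition S4 (t : nat -> nat -> nat -> nat -> R) : R :=
  Series (fun a => Series (fun b => Series (fun c => Series (fun d => t a b c d)))).

Definition EX4 (t : nat -> nat -> nat -> nat -> R) : Prop :=
  (forall a b c, ex_series (t a b c)) /\
  (forall a b, ex_series (fun c => Series (t a b c))) /\
  (forall a, ex_series (fun b => Series (fun c => Series (t a b c)))) /\
  ex_series (fun a => Series (fun b => Series (fun c => Series (t a b c)))).

Lemma fubini4 (t : nat -> nat -> nat -> nat -> R) : (forall a b c d, 0 <= t a b c d) -> EX4 t ->
  S4 t = S4 (fun c d a b => t a b c d).
Proof.
  intros P [E1 [E2 [E3 E4]]]. unfold S4.
  assert (P1 : forall a b c, 0 <= Series (t a b c)) by (intros; apply ser_ge0; [intro; apply P| apply E1]).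
  assert (St1 : forall a, (forall c, ex_series (fun b => Series (t a b c))) /\
     ex_series (fun c => Series (fun b => Series (t a b c))) /\
     Series (fun c => Series (fun b => Series (t a b c))) = Series (fun b => Series (fun c => Series (t a b c)))).
  { intro a. apply (fubini2 (fun b c => Series (t a b c))). intros; apply P1. intro b; apply (E2 a b). apply (E3 a). }
  assert (St2 : forall a c, (forall d, ex_series (fun b => t a b c d)) /\
     ex_series (fun d => Series (fun b => t a b c d)) /\
     Series (fun d => Series (fun b => t a b c d)) = Series (fun b => Series (t a b c))).
  { intros a c. apply (fubini2 (fun b d => t a b c d)). intros; apply P. intro b; apply (E1 a b c). exact (proj1 (St1 a) c). }
  assert (Eq1 : forall a, Series (fun b => Series (fun c => Series (t a b c))) =
     Series (fun c => Series (fun d => Series (fun b => t a b c d)))).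
  { intro a. destruct (St1 a) as [_ [_ H]]. rewrite <- H. apply Series_ext. intro c.
    destruct (St2 a c) as [_ [_ H']]. rewrite H'. reflexivity. }
  transitivity (Series (fun a => Series (fun c => Series (fun d => Series (fun b => t a b c d))))).
  apply Series_ext; intro a; apply Eq1.
  assert (P3 : forall a c, 0 <= Series (fun d => Series (fun b => t a b c d))).
  { intros a c. destruct (St2 a c) as [_ [_ H']]. rewrite H'. apply ser_ge0.
    intro; apply P1. exact (proj1 (St1 a) c). }
  assert (St3 := fubini2 (fun a c => Series (fun d => Series (fun b => t a b c d))) P3).
  destruct St3 as [St3a [St3b St3c]].
  { intro a. destruct (St1 a) as [_ [H _]]. apply (ex_series_ext _ _ (fun c => eq_sym (proj2 (proj2 (St2 a c))))) . exact H. }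
  { apply (ex_series_ext (fun a => Series (fun b => Series (fun c => Series (t a b c))))). exact Eq1. exact E4. }
  rewrite <- St3c. apply Series_ext. intro c.
  assert (P4 : forall a d, 0 <= Series (fun b => t a b c d)).
  { intros a d. apply ser_ge0. intro; apply P. exact (proj1 (St2 a c) d). }
  destruct (fubini2 (fun a d => Series (fun b => t a b c d)) P4) as [_ [_ H4]].
  { intro a. exact (proj1 (proj2 (St2 a c))). }
  { exact (St3a c). }
  rewrite <- H4. reflexivity.
Qed.

Definition indb (b : bool) : R := if b then 1 else 0.
Lemma indb_andb a b : indb (a && b) = indb a * indb b.
Proof. destruct a, b; simpl; ring. Qed.
Lemma indb_bnd b : 0 <= indb b <= 1.
Proof. destruct b; simpl; lra. Qed.

Definition pm (h : nat -> nat -> R) : Prop :=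
  (forall x y, 0 <= h x y) /\ (forall x, ex_series (h x)) /\ is_series (fun x => Series (h x)) 1.

Definition T2 (h g : nat -> nat -> R) (phi : nat -> nat -> nat -> nat -> R) :=
  fun a b c d => phi a b c d * h a b * g c d.
Definition P2 h g phi := S4 (T2 h g phi).

Lemma pm_ex h : pm h -> ex_series (fun x => Series (h x)).
Proof. intros [_ [_ H]]. exists 1; exact H. Qed.
Lemma pm_S h : pm h -> Series (fun x => Series (h x)) = 1.
Proof. intros [_ [_ H]]. apply is_series_unique; exact H. Qed.
Lemma pm_rowge0 h x : pm h -> 0 <= Series (h x).
Proof. intros [P [E _]]. apply ser_ge0; auto. Qed.

Lemma exP2 h g phi B : pm h -> pm g -> (forall a b c d, 0 <= phi a b c d <= B) ->
  EX4 (T2 h g phi) /\ (forall a b c d, 0 <= T2 h g phi a b c d).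
Proof.
  intros Hh Hg Hphi.
  pose proof Hh as [hP [hE hS]]. pose proof Hg as [gP [gE gS]].
  assert (B0 : 0 <= B) by (destruct (Hphi 0 0 0 0)%nat; lra).
  assert (T0 : forall a b c d, 0 <= T2 h g phi a b c d).
  { intros. unfold T2. destruct (Hphi a b c d). apply Rmult_le_pos. apply Rmult_le_pos; auto. auto. }
  assert (Td : forall a b c d, 0 <= T2 h g phi a b c d <= (B * h a b) * g c d).
  { intros. split. auto. unfold T2. destruct (Hphi a b c d).
    specialize (hP a b). specialize (gP c d).
    replace (B * h a b * g c d) with (B * (h a b * g c d)) by ring.
    replace (phi a b c d * h a b * g c d) with (phi a b c d * (h a b * g c d)) by ring.
    apply Rmult_le_compat_r. apply Rmult_le_pos; auto. lra. }
  assert (E1 : forall a b c, ex_series (T2 h g phi a b c)).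
  { intros. apply (ser_cmp _ (fun d => (B * h a b) * g c d)). auto. apply ex_scal'. auto. }
  assert (S1 : forall a b c, 0 <= Series (T2 h g phi a b c) <= (B * h a b) * Series (g c)).
  { intros. split. apply ser_ge0; auto. rewrite <- Series_scal_l. apply Series_le. auto. apply ex_scal'. auto. }
  assert (gSS : Series (fun c => Series (g c)) = 1) by (apply pm_S; auto).
  assert (gE' : ex_series (fun c => Series (g c))) by (apply pm_ex; auto).
  assert (E2 : forall a b, ex_series (fun c => Series (T2 h g phi a b c))).
  { intros. apply (ser_cmp _ (fun c => (B * h a b) * Series (g c))). auto. apply ex_scal'. auto. }
  assert (S2 : forall a b, 0 <= Series (fun c => Series (T2 h g phi a b c)) <= B * h a b).
  { intros. split. apply ser_ge0. intro; apply S1. auto.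
    replace (B * h a b) with ((B * h a b) * Series (fun c => Series (g c))) by (rewrite gSS; ring).
    rewrite <- Series_scal_l. apply Series_le. auto. apply ex_scal'. auto. }
  assert (E3 : forall a, ex_series (fun b => Series (fun c => Series (T2 h g phi a b c)))).
  { intros. apply (ser_cmp _ (fun b => B * h a b)). auto. apply ex_scal'. auto. }
  assert (S3 : forall a, 0 <= Series (fun b => Series (fun c => Series (T2 h g phi a b c))) <= B * Series (h a)).
  { intros. split. apply ser_ge0. intro; apply S2. auto.
    rewrite <- Series_scal_l. apply Series_le. auto. apply ex_scal'. auto. }
  assert (E4 : ex_series (fun a => Series (fun b => Series (fun c => Series (T2 h g phi a b c))))).
  { apply (ser_cmp _ (fun a => B * Series (h a))). auto. apply ex_scal'. apply pm_ex; auto. }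
  split; auto. split; auto.
Qed.

Lemma S4_ext t1 t2 : (forall a b c d, t1 a b c d = t2 a b c d) -> S4 t1 = S4 t2.
Proof. intro H. unfold S4. apply Series_ext; intro a. apply Series_ext; intro b.
  apply Series_ext; intro c. apply Series_ext; intro d. apply H. Qed.

Lemma S4_plus t1 t2 : EX4 t1 -> EX4 t2 -> S4 (fun a b c d => t1 a b c d + t2 a b c d) = S4 t1 + S4 t2.
Proof.
  intros [A1 [A2 [A3 A4]]] [B1 [B2 [B3 B4]]]. unfold S4.
  rewrite <- Series_plus; auto. apply Series_ext; intro a.
  rewrite <- Series_plus; auto. apply Series_ext; intro b.
  rewrite <- Series_plus; auto. apply Series_ext; intro c.
  rewrite <- Series_plus; auto.
Qed.

Lemma S4_scal k t : S4 (fun a b c d => k * t a b c d) = k * S4 t.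
Proof.
  unfold S4. rewrite <- Series_scal_l. apply Series_ext; intro a.
  rewrite <- Series_scal_l. apply Series_ext; intro b.
  rewrite <- Series_scal_l. apply Series_ext; intro c.
  rewrite <- Series_scal_l. reflexivity.
Qed.

Lemma S4_le t1 t2 : (forall a b c d, 0 <= t1 a b c d <= t2 a b c d) -> EX4 t1 -> EX4 t2 -> S4 t1 <= S4 t2.
Proof.
  intros H [A1 [A2 [A3 A4]]] [B1 [B2 [B3 B4]]]. unfold S4.
  assert (P1 : forall a b c d, 0 <= t1 a b c d) by (intros; apply H).
  apply Series_le; auto. intro a. split. apply ser_ge0; auto. intro b.
  apply ser_ge0; auto. intro c. apply ser_ge0; auto.
  apply Series_le; auto. intro b. split. apply ser_ge0; auto. intro c. apply ser_ge0; auto.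
  apply Series_le; auto. intro c. split. apply ser_ge0; auto.
  apply Series_le; auto.
Qed.

Lemma P2_ext h g phi1 phi2 : (forall a b c d, phi1 a b c d = phi2 a b c d) -> P2 h g phi1 = P2 h g phi2.
Proof. intro H. unfold P2. apply S4_ext. intros. unfold T2. rewrite H. reflexivity. Qed.

Lemma P2_ext_supp h g phi1 phi2 : (forall a b c d, h a b <> 0 -> g c d <> 0 -> phi1 a b c d = phi2 a b c d) ->
  P2 h g phi1 = P2 h g phi2.
Proof. intro H. unfold P2. apply S4_ext. intros. unfold T2.
  destruct (Req_dec (h a b) 0) as [E|E]. rewrite E; ring.
  destruct (Req_dec (g c d) 0) as [E'|E']. rewrite E'; ring. rewrite H; auto. Qed.

Lemma P2_plus h g phi1 phi2 B1 B2 : pm h -> pm g ->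
  (forall a b c d, 0 <= phi1 a b c d <= B1) -> (forall a b c d, 0 <= phi2 a b c d <= B2) ->
  P2 h g (fun a b c d => phi1 a b c d + phi2 a b c d) = P2 h g phi1 + P2 h g phi2.
Proof.
  intros Hh Hg H1 H2. unfold P2.
  rewrite <- S4_plus. apply S4_ext; intros; unfold T2; ring.
  apply (exP2 h g phi1 B1); auto. apply (exP2 h g phi2 B2); auto.
Qed.

Lemma P2_scal h g k phi : P2 h g (fun a b c d => k * phi a b c d) = k * P2 h g phi.
Proof. unfold P2. rewrite <- S4_scal. apply S4_ext; intros; unfold T2; ring. Qed.

Lemma P2_le h g phi1 phi2 B : pm h -> pm g ->
  (forall a b c d, 0 <= phi1 a b c d <= phi2 a b c d) -> (forall a b c d, phi2 a b c d <= B) ->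
  P2 h g phi1 <= P2 h g phi2.
Proof.
  intros Hh Hg H1 H2. unfold P2. apply S4_le.
  intros. unfold T2. destruct Hh as [hP _]; destruct Hg as [gP _].
  specialize (hP a b); specialize (gP c d); destruct (H1 a b c d). split.
  apply Rmult_le_pos; auto. apply Rmult_le_pos; auto.
  apply Rmult_le_compat_r; auto. apply Rmult_le_compat_r; auto.
  apply (exP2 h g phi1 B); auto. intros; split. apply H1. specialize (H1 a b c d); specialize (H2 a b c d); lra.
  apply (exP2 h g phi2 B); auto. intros; split. specialize (H1 a b c d); lra. auto.
Qed.

Lemma P2_ge0 h g phi B : pm h -> pm g -> (forall a b c d, 0 <= phi a b c d <= B) -> 0 <= P2 h g phi.
Proof.
  intros Hh Hg H. replace 0 with (P2 h g (fun _ _ _ _ => 0)).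
  apply (P2_le h g _ _ B); auto. intros; split; [lra|apply H]. apply H.
  unfold P2, S4, T2. transitivity (Series (fun _ : nat => 0)).
  apply Series_ext; intro a. transitivity (Series (fun _ : nat => 0)).
  apply Series_ext; intro b. transitivity (Series (fun _ : nat => 0)).
  apply Series_ext; intro c. transitivity (Series (fun _ : nat => 0)).
  apply Series_ext; intro d. ring.
  all: apply is_series_unique; apply ser_lim; apply is_lim_seq_ext with (fun _ => 0);
    [intro n; rewrite sum_const0; reflexivity | apply is_lim_seq_const].
Qed.

Lemma P2_swap h g phi B : pm h -> pm g -> (forall a b c d, 0 <= phi a b c d <= B) ->
  P2 h g phi = P2 g h (fun a b c d => phi c d a b).
Proof.
  intros Hh Hg H. destruct (exP2 h g phi B Hh Hg H) as [E P].
  unfold P2. rewrite fubini4; auto. apply S4_ext. intros. unfold T2. ring.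
Qed.

Lemma P2_inner h g phi : P2 h g phi =
  Series (fun a => Series (fun b => h a b * Series (fun c => Series (fun d => phi a b c d * g c d)))).
Proof.
  unfold P2, S4, T2. apply Series_ext; intro a. apply Series_ext; intro b.
  rewrite <- Series_scal_l. apply Series_ext; intro c.
  rewrite <- Series_scal_l. apply Series_ext; intro d. ring.
Qed.

Lemma P2_one h g : pm h -> pm g -> P2 h g (fun _ _ _ _ => 1) = 1.
Proof.
  intros Hh Hg. rewrite P2_inner.
  transitivity (Series (fun a => Series (fun b => h a b))).
  apply Series_ext; intro a. apply Series_ext; intro b.
  rewrite (Series_ext _ (fun c => Series (g c))). rewrite pm_S; auto. ring.
  intro c. apply Series_ext; intro d; ring.
  apply pm_S; auto.
Qed.

Lemma prob2_P2 h E : prob2 h E = P2 h h (fun a b c d => indb (E a b c d)).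
Proof.
  unfold prob2, P2, S4, T2. apply Series_ext; intro a. apply Series_ext; intro b.
  apply Series_ext; intro c. apply Series_ext; intro d. destruct (E a b c d); simpl; ring.
Qed.

Definition mass (h : nat -> nat -> R) (A : nat -> nat -> bool) : R :=
  Series (fun x => Series (fun y => indb (A x y) * h x y)).

Lemma prob2_prod h A B : prob2 h (fun a b c d => A a b && B c d) = mass h A * mass h B.
Proof.
  rewrite prob2_P2, P2_inner. unfold mass. rewrite <- Series_scal_r.
  apply Series_ext; intro a. rewrite <- Series_scal_r. apply Series_ext; intro b.
  transitivity (h a b * (indb (A a b) * Series (fun c => Series (fun d => indb (B c d) * h c d)))).
  f_equal. rewrite <- Series_scal_l. apply Series_ext; intro c.
  rewrite <- Series_scal_l. apply Series_ext; intro d. rewrite indb_andb. ring. ring.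
Qed.

Definition cdfok (F : Z -> R) : Prop :=
  (forall s, (s < 0)%Z -> F s = 0) /\ (forall s t, (s <= t)%Z -> F s <= F t) /\
  is_lim_seq (fun n => F (Z.of_nat n)) 1.

Lemma cdf_ge0 F s : cdfok F -> 0 <= F s.
Proof. intros [H0 [Hm _]]. destruct (Z_lt_le_dec s 0).
  rewrite H0 by lia. lra. pose proof (H0 (-1)%Z). pose proof (Hm (-1)%Z s). 
  assert (F (-1)%Z = 0) by (apply H0; lia). assert (F (-1)%Z <= F s) by (apply Hm; lia). lra. Qed.

Lemma cdf_le1 F s : cdfok F -> F s <= 1.
Proof. intros [H0 [Hm Hl]].
  assert (Hc : forall n, F (Z.of_nat n) <= 1).
  { apply is_lim_seq_incr_compare; auto. intro n. apply Hm. lia. }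
  destruct (Z_lt_le_dec s 0). rewrite H0 by lia. lra.
  apply Rle_trans with (F (Z.of_nat (Z.to_nat s))). apply Hm; lia. apply Hc. Qed.

Lemma cdf_mono F s t : cdfok F -> (s <= t)%Z -> F s <= F t.
Proof. intros [_ [Hm _]]; auto. Qed.

Lemma cdf_neg F s : cdfok F -> (s < 0)%Z -> F s = 0.
Proof. intros [H _]; auto. Qed.

Definition fX (F : Z -> R) (x : nat) : R := F (Z.of_nat x) - F (Z.of_nat x - 1)%Z.

Lemma sum_ext_loc' (a b : nat -> R) N : (forall n, (n <= N)%nat -> a n = b n) -> sum_n a N = sum_n b N :> R.
Proof. intro H. induction N. rewrite !sum0. apply H; lia. rewrite !sumS, IHN, (H (S N)); [reflexivity|lia|intros; apply H; lia]. Qed.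

Lemma fX_ge0 F x : cdfok F -> 0 <= fX F x.
Proof. intro H. unfold fX. assert (F (Z.of_nat x - 1)%Z <= F (Z.of_nat x)) by (apply cdf_mono; auto; lia). lra. Qed.

Lemma tele (u : Z -> R) N : sum_n (fun n => u (Z.of_nat n) - u (Z.of_nat n - 1)%Z) N = u (Z.of_nat N) - u (-1)%Z :> R.
Proof. induction N. rewrite sum0. reflexivity.
  rewrite sumS, IHN. replace (Z.of_nat (S N) - 1)%Z with (Z.of_nat N) by lia. ring. Qed.

Lemma fX_series F : cdfok F -> is_series (fX F) 1.
Proof. intro H. apply ser_lim. apply is_lim_seq_ext with (fun n => F (Z.of_nat n)).
  intro n. unfold fX. assert (T := tele F n). rewrite (cdf_neg F (-1)) in T by (auto; lia).
  rewrite Rminus_0_r in T. symmetry; exact T.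
  destruct H as [_ [_ H]]; exact H. Qed.

Lemma cdf_sum F a : cdfok F -> Series (fun x => indb (Z.leb (Z.of_nat x) a) * fX F x) = F a.
Proof.
  intro H. destruct (Z_lt_le_dec a 0).
  - rewrite cdf_neg by auto. transitivity (Series (fun _ : nat => 0)).
    apply Series_ext; intro x. destruct (Z.leb_spec (Z.of_nat x) a). lia. simpl; ring.
    apply is_series_unique. pose proof (ser_fin (fun _ : nat => 0) 0). rewrite sum0 in H0. apply H0; auto.
  - apply is_series_unique.
    replace (F a) with (sum_n (fun x => indb (Z.leb (Z.of_nat x) a) * fX F x) (Z.to_nat a)).
    apply ser_fin. intros n Hn. destruct (Z.leb_spec (Z.of_nat n) a). lia. simpl; ring.
    rewrite (sum_ext_loc' _ (fun x => F (Z.of_nat x) - F (Z.of_nat x - 1)%Z)).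
    rewrite tele. rewrite (cdf_neg F (-1)) by (auto; lia). rewrite Z2Nat.id by lia. apply Rminus_0_r.
    intros n Hn. destruct (Z.leb_spec (Z.of_nat n) a). unfold fX; simpl; ring. lia.
Qed.

Lemma tsum (u : Z -> R) a : (forall s, (s < 0)%Z -> u s = 0) ->
  Series (fun x => indb (Z.leb (Z.of_nat x) a) * (u (Z.of_nat x) - u (Z.of_nat x - 1)%Z)) = u a.
Proof.
  intro H. destruct (Z_lt_le_dec a 0).
  - rewrite H by auto. transitivity (Series (fun _ : nat => 0)).
    apply Series_ext; intro x. destruct (Z.leb_spec (Z.of_nat x) a). lia. simpl; ring.
    apply is_series_unique. pose proof (ser_fin (fun _ : nat => 0) 0). rewrite sum0 in H0. apply H0; auto.
  - apply is_series_unique.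
    replace (u a) with (sum_n (fun x => indb (Z.leb (Z.of_nat x) a) * (u (Z.of_nat x) - u (Z.of_nat x - 1)%Z)) (Z.to_nat a)).
    apply ser_fin. intros n Hn. destruct (Z.leb_spec (Z.of_nat n) a). lia. simpl; ring.
    rewrite (sum_ext_loc' _ (fun x => u (Z.of_nat x) - u (Z.of_nat x - 1)%Z)).
    rewrite tele. rewrite (H (-1)%Z) by lia. rewrite Z2Nat.id by lia. apply Rminus_0_r.
    intros n Hn. destruct (Z.leb_spec (Z.of_nat n) a). simpl; ring. lia.
Qed.

Lemma sq_series F : cdfok F -> Series (fun x => fX F x * (F (Z.of_nat x) + F (Z.of_nat x - 1)%Z)) = 1.
Proof.
  intro H. apply is_series_unique. apply ser_lim.
  apply is_lim_seq_ext with (fun n => F (Z.of_nat n) * F (Z.of_nat n)).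
  intro n. assert (T := tele (fun s => F s * F s) n). cbv beta in T. rewrite (cdf_neg F (-1)) in T by (auto; lia).
  transitivity (sum_n (fun k => F (Z.of_nat k) * F (Z.of_nat k) - F (Z.of_nat k - 1)%Z * F (Z.of_nat k - 1)%Z) n).
  rewrite T. ring. apply sum_ext'. intro k. unfold fX. ring.
  destruct H as [_ [_ Hl]]. assert (X := is_lim_seq_mult' _ _ 1 1 Hl Hl). rewrite Rmult_1_r in X. exact X.
Qed.

Definition hT (h : nat -> nat -> R) : nat -> nat -> R := fun x y => h y x.

Lemma joint_T h F G : is_joint_pmf h F G -> is_joint_pmf (hT h) G F.
Proof. intros [P [A B]]. split. intros; apply P. split; assumption. Qed.

Lemma rowS h F G x : is_joint_pmf h F G -> Series (h x) = fX F x.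
Proof. intros [_ [A _]]. apply is_series_unique. apply A. Qed.

Lemma colS h F G y : is_joint_pmf h F G -> Series (fun x => h x y) = fX G y.
Proof. intros [_ [_ B]]. apply is_series_unique. apply B. Qed.

Lemma joint_pm h F G : cdfok F -> cdfok G -> is_joint_pmf h F G -> pm h.
Proof.
  intros HF HG J. pose proof J as [P [A B]]. split; auto. split.
  intro x; exists (fX F x); apply A.
  apply (is_series_ext (fX F)). intro x; symmetry; apply (rowS h F G x J). apply fX_series; auto.
Qed.

Lemma massX h F G (psi : nat -> R) : is_joint_pmf h F G ->
  Series (fun x => Series (fun y => psi x * h x y)) = Series (fun x => psi x * fX F x).
Proof. intro J. apply Series_ext; intro x. rewrite Series_scal_l. rewrite (rowS h F G x J). reflexivity. Qed.

Lemma massY h F G (psi : nat -> R) B : cdfok F -> cdfok G -> is_joint_pmf h F G -> (forall y, 0 <= psi y <= B) ->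
  Series (fun x => Series (fun y => psi y * h x y)) = Series (fun y => psi y * fX G y).
Proof.
  intros HF HG J Hp. assert (Hh := joint_pm h F G HF HG J). pose proof Hh as [P [Er Eo]].
  assert (NN : forall x y, 0 <= psi y * h x y) by (intros; apply Rmult_le_pos; [apply Hp| apply P]).
  assert (Le : forall x y, 0 <= psi y * h x y <= B * h x y).
  { intros; split; auto. apply Rmult_le_compat_r. apply P. apply Hp. }
  destruct (fubini2 (fun x y => psi y * h x y)) as [_ [_ Eq]]; auto.
  intro x. apply (ser_cmp _ (fun y => B * h x y)); auto. apply ex_scal'; auto.
  apply (ser_cmp _ (fun x => B * Series (h x))). intro x. split. apply ser_ge0. intro; apply NN. apply (ser_cmp _ (fun y => B * h x y)); [intro; apply Le| apply ex_scal'; apply Er].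
  rewrite <- Series_scal_l. apply Series_le; auto. apply ex_scal'; auto.
  apply ex_scal'. apply pm_ex; auto.
  rewrite <- Eq. apply Series_ext; intro y. rewrite Series_scal_l. rewrite (colS h F G y J). reflexivity.
Qed.

Definition S2 (t : nat -> nat -> R) := Series (fun x => Series (t x)).
Definition EX2 (t : nat -> nat -> R) := (forall x, ex_series (t x)) /\ ex_series (fun x => Series (t x)).

Lemma ex2 h psi B : pm h -> (forall x y, 0 <= psi x y <= B) -> EX2 (fun x y => psi x y * h x y).
Proof.
  intros Hh Hp. pose proof Hh as [P [Er Eo]].
  assert (Le : forall x y, 0 <= psi x y * h x y <= B * h x y).
  { intros; split. apply Rmult_le_pos; [apply Hp|apply P]. apply Rmult_le_compat_r. apply P. apply Hp. }
  split. intro x. apply (ser_cmp _ (fun y => B * h x y)); auto. apply ex_scal'; auto.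
  apply (ser_cmp _ (fun x => B * Series (h x))). intro x. split. apply ser_ge0. intro; apply Le.
  apply (ser_cmp _ (fun y => B * h x y)); auto. apply ex_scal'; auto.
  rewrite <- Series_scal_l. apply Series_le; auto. apply ex_scal'; auto.
  apply ex_scal'. apply pm_ex; auto.
Qed.

Lemma S2_ext t1 t2 : (forall x y, t1 x y = t2 x y) -> S2 t1 = S2 t2.
Proof. intro H. unfold S2. apply Series_ext; intro x. apply Series_ext; intro y. apply H. Qed.

Lemma S2_plus t1 t2 : EX2 t1 -> EX2 t2 -> S2 (fun x y => t1 x y + t2 x y) = S2 t1 + S2 t2.
Proof.
  intros [A1 A2] [B1 B2]. unfold S2. rewrite <- Series_plus; auto. apply Series_ext; intro x.
  rewrite <- Series_plus; auto.
Qed.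

Lemma S2_le t1 t2 : (forall x y, 0 <= t1 x y <= t2 x y) -> EX2 t2 -> S2 t1 <= S2 t2.
Proof.
  intros H [B1 B2]. unfold S2. apply Series_le; auto. intro x. split.
  apply ser_ge0. intro; apply H. apply (ser_cmp _ (t2 x)); auto.
  apply Series_le; auto.
Qed.

Lemma mass_true h : pm h -> mass h (fun _ _ => true) = 1.
Proof. intro Hh. unfold mass. rewrite <- (pm_S h Hh). apply Series_ext; intro x. apply Series_ext; intro y. simpl; ring. Qed.

Lemma mass_le h A B : pm h -> (forall x y, A x y = true -> B x y = true) -> mass h A <= mass h B.
Proof.
  intros Hh H. apply (S2_le (fun x y => indb (A x y) * h x y) (fun x y => indb (B x y) * h x y)).
  intros x y. destruct Hh as [P _]. specialize (P x y). specialize (H x y).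
  revert H. destruct (A x y), (B x y); simpl; intro H; try lra; try (specialize (H eq_refl); discriminate).
  apply (ex2 h (fun x y => indb (B x y)) 1); auto. intros; apply indb_bnd.
Qed.

Lemma mass_ge0 h A : pm h -> 0 <= mass h A.
Proof. intro Hh. replace 0 with (mass h (fun _ _ => false)). apply mass_le; auto. try (intros x y Hf; discriminate Hf).
  unfold mass. simpl. transitivity (Series (fun _ : nat => 0)). apply Series_ext; intro x.
  transitivity (Series (fun _ : nat => 0)). apply Series_ext; intro; ring.
  all: apply is_series_unique; pose proof (ser_fin (fun _ : nat => 0) 0) as H0; rewrite sum0 in H0; apply H0; auto.
Qed.

Lemma mass_ext_supp h A B : (forall x y, h x y <> 0 -> A x y = B x y) -> mass h A = mass h B.
Proof. intro H. unfold mass. apply Series_ext; intro x. apply Series_ext; intro y.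
  destruct (Req_dec (h x y) 0) as [E|E]. rewrite E; ring. rewrite H; auto. Qed.

Lemma mass_plus h A B : pm h -> mass h A + mass h B = mass h (fun x y => A x y || B x y) + mass h (fun x y => A x y && B x y).
Proof.
  intro Hh. unfold mass. fold (S2 (fun x y => indb (A x y) * h x y)). fold (S2 (fun x y => indb (B x y) * h x y)).
  fold (S2 (fun x y => indb (A x y || B x y) * h x y)). fold (S2 (fun x y => indb (A x y && B x y) * h x y)).
  rewrite <- !S2_plus. apply S2_ext. intros x y. destruct (A x y), (B x y); simpl; ring.
  all: apply (ex2 h _ 1); auto; intros; apply indb_bnd.
Qed.

Definition box (a b : Z) (x y : nat) : bool := Z.leb (Z.of_nat x) a && Z.leb (Z.of_nat y) b.
Definition Hc h a b := mass h (box a b).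

Lemma Hc_le_F h F G a b : cdfok F -> cdfok G -> is_joint_pmf h F G -> Hc h a b <= F a.
Proof.
  intros HF HG J. apply Rle_trans with (mass h (fun x y => Z.leb (Z.of_nat x) a)).
  apply mass_le. apply (joint_pm h F G); auto. intros x y; unfold box. destruct (Z.leb (Z.of_nat x) a); auto.
  unfold mass. rewrite (massX h F G (fun x => indb (Z.leb (Z.of_nat x) a))); auto. rewrite cdf_sum; auto. lra.
Qed.

Lemma Hc_le_G h F G a b : cdfok F -> cdfok G -> is_joint_pmf h F G -> Hc h a b <= G b.
Proof.
  intros HF HG J. apply Rle_trans with (mass h (fun x y => Z.leb (Z.of_nat y) b)).
  apply mass_le. apply (joint_pm h F G); auto. intros x y; unfold box. destruct (Z.leb (Z.of_nat x) a); auto. try (simpl; intro Hf; discriminate Hf).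
  unfold mass. rewrite (massY h F G (fun y => indb (Z.leb (Z.of_nat y) b)) 1); auto. rewrite cdf_sum; auto. lra.
  intros; apply indb_bnd.
Qed.

Lemma Hc_ge h F G a b : cdfok F -> cdfok G -> is_joint_pmf h F G -> F a + G b - 1 <= Hc h a b.
Proof.
  intros HF HG J. assert (Hh := joint_pm h F G HF HG J).
  assert (E := mass_plus h (fun x y => Z.leb (Z.of_nat x) a) (fun x y => Z.leb (Z.of_nat y) b) Hh).
  assert (E1 : mass h (fun x y => Z.leb (Z.of_nat x) a) = F a).
  { unfold mass. rewrite (massX h F G (fun x => indb (Z.leb (Z.of_nat x) a))); auto. rewrite cdf_sum; auto. }
  assert (E2 : mass h (fun x y => Z.leb (Z.of_nat y) b) = G b).
  { unfold mass. rewrite (massY h F G (fun y => indb (Z.leb (Z.of_nat y) b)) 1); auto. rewrite cdf_sum; auto. intros; apply indb_bnd. }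
  assert (L := mass_le h (fun x y => Z.leb (Z.of_nat x) a || Z.leb (Z.of_nat y) b) (fun _ _ => true) Hh (fun _ _ _ => eq_refl)).
  rewrite mass_true in L; auto. unfold Hc. fold (box a b) in E.
  replace (mass h (box a b)) with (mass h (fun x y => Z.leb (Z.of_nat x) a && Z.leb (Z.of_nat y) b)) by reflexivity.
  lra.
Qed.

Lemma Hc_ge0 h a b : pm h -> 0 <= Hc h a b.
Proof. intro; apply mass_ge0; auto. Qed.

Lemma box_mass C a b : (forall s t, (s < 0)%Z \/ (t < 0)%Z -> C s t = 0) ->
  Hc (pmf_of_cdf2 C) a b = C a b.
Proof.
  intro HC. unfold Hc, mass, box.
  transitivity (Series (fun x => indb (Z.leb (Z.of_nat x) a) *
      ((C (Z.of_nat x) b - C (Z.of_nat x - 1)%Z b) - 0))).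
  - apply Series_ext; intro x. rewrite Rminus_0_r.
    transitivity (indb (Z.leb (Z.of_nat x) a) * Series (fun y => indb (Z.leb (Z.of_nat y) b) *
       ((C (Z.of_nat x) (Z.of_nat y) - C (Z.of_nat x - 1)%Z (Z.of_nat y)) -
        (C (Z.of_nat x) (Z.of_nat y - 1)%Z - C (Z.of_nat x - 1)%Z (Z.of_nat y - 1)%Z)))).
    rewrite <- Series_scal_l. apply Series_ext; intro y. rewrite indb_andb. unfold pmf_of_cdf2. ring.
    f_equal. apply (tsum (fun t => C (Z.of_nat x) t - C (Z.of_nat x - 1)%Z t)).
    intros s Hs. rewrite !HC by lia. ring.
  - rewrite (Series_ext _ (fun x => indb (Z.leb (Z.of_nat x) a) * (C (Z.of_nat x) b - C (Z.of_nat x - 1)%Z b))).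
    apply (tsum (fun s => C s b)). intros s Hs. apply HC; lia.
    intro; ring.
Qed.

Definition cxx (a c : nat) : R := indb (Z.leb (Z.of_nat c) (Z.of_nat a)) + indb (Z.leb (Z.of_nat c) (Z.of_nat a - 1)).
Definition kk (a b c d : nat) : R := cxx a c * cxx b d.

Lemma cxx_val a c : cxx a c = if Nat.ltb a c then 0 else if Nat.ltb c a then 2 else 1.
Proof.
  unfold cxx. destruct (Nat.ltb_spec a c); destruct (Nat.ltb_spec c a);
  destruct (Z.leb_spec (Z.of_nat c) (Z.of_nat a)); destruct (Z.leb_spec (Z.of_nat c) (Z.of_nat a - 1));
  simpl; try lia; ring.
Qed.

Lemma cxx_bnd a c : 0 <= cxx a c <= 2.
Proof. rewrite cxx_val. destruct (Nat.ltb a c); [|destruct (Nat.ltb c a)]; lra. Qed.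

Lemma kk_bnd a b c d : 0 <= kk a b c d <= 4.
Proof. unfold kk. pose proof (cxx_bnd a c); pose proof (cxx_bnd b d). split. nra. nra. Qed.

Lemma conc_val a b c d : concordant a b c d = (Nat.ltb a c && Nat.ltb b d) || (Nat.ltb c a && Nat.ltb d b).
Proof.
  unfold concordant.
  destruct (Nat.ltb_spec a c); destruct (Nat.ltb_spec c a); destruct (Nat.ltb_spec b d); destruct (Nat.ltb_spec d b);
  simpl; destruct (Z.ltb_spec 0 ((Z.of_nat a - Z.of_nat c) * (Z.of_nat b - Z.of_nat d))); try reflexivity; nia.
Qed.

Lemma disc_val a b c d : discordant a b c d = (Nat.ltb a c && Nat.ltb d b) || (Nat.ltb c a && Nat.ltb b d).
Proof.
  unfold discordant.
  destruct (Nat.ltb_spec a c); destruct (Nat.ltb_spec c a); destruct (Nat.ltb_spec b d); destruct (Nat.ltb_spec d b);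
  simpl; destruct (Z.ltb_spec ((Z.of_nat a - Z.of_nat c) * (Z.of_nat b - Z.of_nat d)) 0); try reflexivity; nia.
Qed.

Lemma kk_sym_pt a b c d : kk a b c d + kk c d a b + 2 * indb (discordant a b c d) = 2 + 2 * indb (concordant a b c d).
Proof.
  unfold kk. rewrite conc_val, disc_val, !cxx_val.
  destruct (Nat.ltb_spec a c); destruct (Nat.ltb_spec c a); destruct (Nat.ltb_spec b d); destruct (Nat.ltb_spec d b);
  simpl; try lia; ring.
Qed.

Lemma kk_swap_pt a b c d : kk c d a b + 2 * cxx a c + 2 * cxx b d = 4 + kk a b c d.
Proof.
  unfold kk. rewrite !cxx_val.
  destruct (Nat.ltb_spec a c); destruct (Nat.ltb_spec c a); destruct (Nat.ltb_spec b d); destruct (Nat.ltb_spec d b);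
  simpl; try lia; ring.
Qed.

Lemma tau_W h : pm h -> kendall_tau_A h = P2 h h (fun a b c d => kk a b c d) - 1.
Proof.
  intro Hh. unfold kendall_tau_A. rewrite !prob2_P2.
  assert (E : P2 h h (fun a b c d => (kk a b c d + kk c d a b) + 2 * indb (discordant a b c d)) =
              P2 h h (fun a b c d => 2 * 1 + 2 * indb (concordant a b c d))).
  { apply P2_ext. intros. rewrite Rmult_1_r. apply kk_sym_pt. }
  rewrite (P2_plus h h _ _ 8 2) in E; auto.
  rewrite (P2_plus h h _ _ 4 4) in E; auto.
  rewrite (P2_plus h h _ _ 2 2) in E; auto.
  rewrite !P2_scal, P2_one in E; auto.
  rewrite <- (P2_swap h h (fun a b c d => kk a b c d) 4) in E; auto.
  change (P2 h h kk) with (P2 h h (fun a b c d => kk a b c d)) in E. lra.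
  all: intros; try apply kk_bnd; try (pose proof (kk_bnd a b c d); pose proof (kk_bnd c d a b); lra);
    try (pose proof (indb_bnd (discordant a b c d)); lra); try (pose proof (indb_bnd (concordant a b c d)); lra); lra.
Qed.

Lemma cxx_sumF F a : cdfok F -> Series (fun c => cxx a c * fX F c) = F (Z.of_nat a) + F (Z.of_nat a - 1)%Z.
Proof.
  intro HF. unfold cxx.
  assert (Ex : forall t, ex_series (fun c => indb (Z.leb (Z.of_nat c) t) * fX F c)).
  { intro t. apply (ser_cmp _ (fX F)). intro c. pose proof (fX_ge0 F c HF). pose proof (indb_bnd (Z.leb (Z.of_nat c) t)). split; nra.
    exists 1; apply fX_series; auto. }
  rewrite (Series_ext _ (fun c => indb (Z.leb (Z.of_nat c) (Z.of_nat a)) * fX F c + indb (Z.leb (Z.of_nat c) (Z.of_nat a - 1)) * fX F c)).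
  rewrite Series_plus; auto. rewrite !cdf_sum; auto. intro; ring.
Qed.

Lemma Pcx h g F G : cdfok F -> cdfok G -> is_joint_pmf h F G -> is_joint_pmf g F G ->
  P2 h g (fun a b c d => cxx a c) = 1.
Proof.
  intros HF HG Jh Jg. rewrite P2_inner.
  transitivity (Series (fun a => Series (fun b => (F (Z.of_nat a) + F (Z.of_nat a - 1)%Z) * h a b))).
  apply Series_ext; intro a. apply Series_ext; intro b. rewrite Rmult_comm. f_equal.
  rewrite (massX g F G (fun c => cxx a c)); auto. apply cxx_sumF; auto.
  rewrite (massX h F G (fun a => F (Z.of_nat a) + F (Z.of_nat a - 1)%Z)); auto.
  rewrite <- (sq_series F HF). apply Series_ext; intro; ring.
Qed.

Lemma Pcy h g F G : cdfok F -> cdfok G -> is_joint_pmf h F G -> is_joint_pmf g F G ->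
  P2 h g (fun a b c d => cxx b d) = 1.
Proof.
  intros HF HG Jh Jg. rewrite P2_inner.
  transitivity (Series (fun a => Series (fun b => (G (Z.of_nat b) + G (Z.of_nat b - 1)%Z) * h a b))).
  apply Series_ext; intro a. apply Series_ext; intro b. rewrite Rmult_comm. f_equal.
  rewrite (massY g F G (fun d => cxx b d) 2); auto. apply cxx_sumF; auto. intros; apply cxx_bnd.
  rewrite (massY h F G (fun b => G (Z.of_nat b) + G (Z.of_nat b - 1)%Z) 2); auto.
  rewrite <- (sq_series G HG). apply Series_ext; intro; ring.
  intro y. pose proof (cdf_ge0 G (Z.of_nat y) HG). pose proof (cdf_ge0 G (Z.of_nat y - 1) HG).
  pose proof (cdf_le1 G (Z.of_nat y) HG). pose proof (cdf_le1 G (Z.of_nat y - 1) HG). lra.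
Qed.

Lemma W_sym h g F G : cdfok F -> cdfok G -> is_joint_pmf h F G -> is_joint_pmf g F G ->
  P2 h g (fun a b c d => kk a b c d) = P2 g h (fun a b c d => kk a b c d).
Proof.
  intros HF HG Jh Jg. assert (Hh := joint_pm h F G HF HG Jh). assert (Hg := joint_pm g F G HF HG Jg).
  assert (E : P2 h g (fun a b c d => (kk c d a b + 2 * cxx a c) + 2 * cxx b d) =
              P2 h g (fun a b c d => 4 * 1 + kk a b c d)).
  { apply P2_ext. intros. rewrite Rmult_1_r. apply kk_swap_pt. }
  rewrite (P2_plus h g _ _ 8 4) in E; auto.
  rewrite (P2_plus h g _ _ 4 4) in E; auto.
  rewrite (P2_plus h g _ _ 4 4) in E; auto.
  rewrite !P2_scal, P2_one in E; auto.
  rewrite (Pcx h g F G), (Pcy h g F G) in E; auto.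
  rewrite (P2_swap h g (fun a b c d => kk c d a b) 4) in E; auto.
  change (P2 h g kk) with (P2 h g (fun a b c d => kk a b c d)) in E. lra.
  all: intros; try apply kk_bnd; try (pose proof (kk_bnd a b c d); pose proof (kk_bnd c d a b); lra);
    try (pose proof (cxx_bnd a c); pose proof (cxx_bnd b d); pose proof (kk_bnd c d a b); lra); lra.
Qed.

Lemma EX2_plus t1 t2 : EX2 t1 -> EX2 t2 -> EX2 (fun x y => t1 x y + t2 x y).
Proof. intros [A1 A2] [B1 B2]. split. intro x; apply ex_plus'; auto.
  apply (ex_series_ext (fun x => Series (t1 x) + Series (t2 x))). intro x. rewrite Series_plus; auto.
  apply ex_plus'; auto. Qed.

Definition Kf (g : nat -> nat -> R) (a b : nat) : R :=
  Hc g (Z.of_nat a) (Z.of_nat b) + Hc g (Z.of_nat a - 1)%Z (Z.of_nat b) +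
  Hc g (Z.of_nat a) (Z.of_nat b - 1)%Z + Hc g (Z.of_nat a - 1)%Z (Z.of_nat b - 1)%Z.

Lemma inner_kk g a b : pm g -> Series (fun c => Series (fun d => kk a b c d * g c d)) = Kf g a b.
Proof.
  intro Hg. unfold Kf, Hc, mass.
  set (A := Z.of_nat a). set (B := Z.of_nat b).
  fold (S2 (fun c d => kk a b c d * g c d)).
  fold (S2 (fun c d => indb (box A B c d) * g c d)).
  fold (S2 (fun c d => indb (box (A - 1) B c d) * g c d)).
  fold (S2 (fun c d => indb (box A (B - 1) c d) * g c d)).
  fold (S2 (fun c d => indb (box (A - 1) (B - 1) c d) * g c d)).
  rewrite <- !S2_plus. apply S2_ext. intros c d. unfold kk, cxx, box. rewrite !indb_andb. subst A B. ring.
  all: repeat apply EX2_plus.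
  all: match goal with |- EX2 (fun x y => indb (?P x y) * ?h x y) => apply (ex2 h (fun x y => indb (P x y)) 1) end; auto; intros; apply indb_bnd.
Qed.

Lemma W_Kf h g : pm g -> P2 h g (fun a b c d => kk a b c d) = S2 (fun a b => Kf g a b * h a b).
Proof. intro Hg. rewrite P2_inner. unfold S2. apply Series_ext; intro a. apply Series_ext; intro b.
  rewrite inner_kk; auto. ring. Qed.

Lemma Kf_ge0 g a b : pm g -> 0 <= Kf g a b.
Proof. intro Hg. unfold Kf. pose proof (Hc_ge0 g (Z.of_nat a) (Z.of_nat b) Hg).
  pose proof (Hc_ge0 g (Z.of_nat a - 1) (Z.of_nat b) Hg). pose proof (Hc_ge0 g (Z.of_nat a) (Z.of_nat b - 1) Hg).
  pose proof (Hc_ge0 g (Z.of_nat a - 1) (Z.of_nat b - 1) Hg). lra. Qed.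

Lemma W_mono h g1 g2 : pm h -> pm g1 -> pm g2 -> (forall A B, Hc g1 A B <= Hc g2 A B) -> (forall A B, Hc g2 A B <= 1) ->
  P2 h g1 (fun a b c d => kk a b c d) <= P2 h g2 (fun a b c d => kk a b c d).
Proof.
  intros Hh H1 H2 Hle H1b. rewrite !W_Kf; auto. apply S2_le.
  intros a b. destruct Hh as [P _]. specialize (P a b). pose proof (Kf_ge0 g1 a b H1).
  assert (Kf g1 a b <= Kf g2 a b) by (unfold Kf; repeat match goal with |- context [Hc g1 ?x ?y] => pose proof (Hle x y); fail end;
    pose proof (Hle (Z.of_nat a) (Z.of_nat b)); pose proof (Hle (Z.of_nat a - 1)%Z (Z.of_nat b));
    pose proof (Hle (Z.of_nat a) (Z.of_nat b - 1)%Z); pose proof (Hle (Z.of_nat a - 1)%Z (Z.of_nat b - 1)%Z); lra).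
  split; nra.
  apply (ex2 h (fun a b => Kf g2 a b) 4); auto. intros a b. split. apply Kf_ge0; auto.
  unfold Kf. pose proof (H1b (Z.of_nat a) (Z.of_nat b)); pose proof (H1b (Z.of_nat a - 1)%Z (Z.of_nat b));
    pose proof (H1b (Z.of_nat a) (Z.of_nat b - 1)%Z); pose proof (H1b (Z.of_nat a - 1)%Z (Z.of_nat b - 1)%Z); lra.
Qed.

Lemma tau_mono F G h m : cdfok F -> cdfok G -> is_joint_pmf h F G -> is_joint_pmf m F G ->
  (forall A B, Hc h A B <= Hc m A B) -> kendall_tau_A h <= kendall_tau_A m.
Proof.
  intros HF HG Jh Jm Hle. assert (Hh := joint_pm h F G HF HG Jh). assert (Hm := joint_pm m F G HF HG Jm).
  assert (B1 : forall g A B, is_joint_pmf g F G -> Hc g A B <= 1).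
  { intros g A B Jg. apply Rle_trans with (F A). apply (Hc_le_F g F G); auto. apply cdf_le1; auto. }
  rewrite !tau_W; auto.
  assert (X1 := W_mono h h m Hh Hh Hm Hle (fun A B => B1 m A B Jm)).
  assert (X2 := W_mono m h m Hm Hh Hm Hle (fun A B => B1 m A B Jm)).
  rewrite (W_sym h m F G) in X1; auto. lra.
Qed.

Definition mU F G := pmf_of_cdf2 (frechet_upper F G).
Definition mL F G := pmf_of_cdf2 (frechet_lower F G).

Lemma rect_min x1 x2 y1 y2 : x1 <= x2 -> y1 <= y2 ->
  0 <= Rmin x2 y2 - Rmin x1 y2 - Rmin x2 y1 + Rmin x1 y1.
Proof. intros. unfold Rmin. repeat destruct Rle_dec; lra. Qed.

Lemma rect_max x1 x2 y1 y2 : x1 <= x2 -> y1 <= y2 ->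
  0 <= Rmax (x2 + y2 - 1) 0 - Rmax (x1 + y2 - 1) 0 - Rmax (x2 + y1 - 1) 0 + Rmax (x1 + y1 - 1) 0.
Proof. intros. unfold Rmax. repeat destruct Rle_dec; lra. Qed.

Lemma U_zero F G s t : cdfok F -> cdfok G -> (s < 0)%Z \/ (t < 0)%Z -> frechet_upper F G s t = 0.
Proof. intros HF HG [H|H]; unfold frechet_upper.
  rewrite (cdf_neg F s) by auto. pose proof (cdf_ge0 G t HG). unfold Rmin; destruct Rle_dec; lra.
  rewrite (cdf_neg G t) by auto. pose proof (cdf_ge0 F s HF). unfold Rmin; destruct Rle_dec; lra. Qed.

Lemma L_zero F G s t : cdfok F -> cdfok G -> (s < 0)%Z \/ (t < 0)%Z -> frechet_lower F G s t = 0.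
Proof. intros HF HG [H|H]; unfold frechet_lower.
  rewrite (cdf_neg F s) by auto. pose proof (cdf_le1 G t HG). unfold Rmax; destruct Rle_dec; lra.
  rewrite (cdf_neg G t) by auto. pose proof (cdf_le1 F s HF). unfold Rmax; destruct Rle_dec; lra. Qed.

Lemma Hc_U F G A B : cdfok F -> cdfok G -> Hc (mU F G) A B = Rmin (F A) (G B).
Proof. intros. unfold mU. rewrite box_mass. reflexivity. intros; apply U_zero; auto. Qed.

Lemma Hc_L F G A B : cdfok F -> cdfok G -> Hc (mL F G) A B = Rmax (F A + G B - 1) 0.
Proof. intros. unfold mL. rewrite box_mass. reflexivity. intros; apply L_zero; auto. Qed.

Lemma lim_min c (u : nat -> R) : is_lim_seq u 1 -> (forall n, u n <= 1) -> c <= 1 ->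
  is_lim_seq (fun n => Rmin c (u n)) c.
Proof.
  intros Hu Hb Hc. apply is_lim_seq_le_le with (fun n => c + (u n - 1)) (fun _ => c).
  intro n. specialize (Hb n). unfold Rmin; destruct Rle_dec; lra.
  replace (Finite c) with (Rbar_plus c (Rbar_minus 1 1)) by (simpl; f_equal; ring).
  apply is_lim_seq_plus'. apply is_lim_seq_const. apply is_lim_seq_minus'. auto. apply is_lim_seq_const.
  apply is_lim_seq_const.
Qed.

Lemma lim_max c (u : nat -> R) : is_lim_seq u 1 -> (forall n, u n <= 1) -> 0 <= c ->
  is_lim_seq (fun n => Rmax (c + u n - 1) 0) c.
Proof.
  intros Hu Hb Hc. apply is_lim_seq_le_le with (fun n => c + (u n - 1)) (fun _ => c).
  intro n. specialize (Hb n). unfold Rmax; destruct Rle_dec; lra.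
  replace (Finite c) with (Rbar_plus c (Rbar_minus 1 1)) by (simpl; f_equal; ring).
  apply is_lim_seq_plus'. apply is_lim_seq_const. apply is_lim_seq_minus'. auto. apply is_lim_seq_const.
  apply is_lim_seq_const.
Qed.

Lemma row_gen (C : Z -> Z -> R) (x : nat) (l : R) :
  (forall s, C s (-1)%Z = 0) ->
  is_lim_seq (fun n => C (Z.of_nat x) (Z.of_nat n) - C (Z.of_nat x - 1)%Z (Z.of_nat n)) l ->
  is_series (fun y => pmf_of_cdf2 C x y) l.
Proof.
  intros H0 Hl. apply ser_lim. apply is_lim_seq_ext with (fun n => C (Z.of_nat x) (Z.of_nat n) - C (Z.of_nat x - 1)%Z (Z.of_nat n)); auto.
  intro n. assert (T := tele (fun t => C (Z.of_nat x) t - C (Z.of_nat x - 1)%Z t) n). cbv beta in T.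
  rewrite !H0 in T. transitivity (sum_n (fun k => C (Z.of_nat x) (Z.of_nat k) - C (Z.of_nat x - 1)%Z (Z.of_nat k) -
     (C (Z.of_nat x) (Z.of_nat k - 1)%Z - C (Z.of_nat x - 1)%Z (Z.of_nat k - 1)%Z)) n).
  rewrite T; ring. apply sum_ext'. intro k. unfold pmf_of_cdf2. ring.
Qed.

Lemma mU_T F G x y : mU F G x y = mU G F y x.
Proof. unfold mU, pmf_of_cdf2, frechet_upper. rewrite !(Rmin_comm (G _)). ring. Qed.

Lemma mL_T F G x y : mL F G x y = mL G F y x.
Proof. unfold mL, pmf_of_cdf2, frechet_lower. cbv zeta. rewrite !(Rplus_comm (G _) (F _)). ring. Qed.

Lemma rowU F G x : cdfok F -> cdfok G -> is_series (fun y => mU F G x y) (fX F x).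
Proof.
  intros HF HG. unfold mU. apply row_gen. intro s. apply U_zero; auto; lia.
  unfold fX, frechet_upper. apply is_lim_seq_minus'; apply lim_min.
  all: try (destruct HG as [_ [_ L]]; exact L). all: try (intro; apply cdf_le1; auto). all: apply cdf_le1; auto.
Qed.

Lemma rowL F G x : cdfok F -> cdfok G -> is_series (fun y => mL F G x y) (fX F x).
Proof.
  intros HF HG. unfold mL. apply row_gen. intro s. apply L_zero; auto; lia.
  unfold fX, frechet_lower. apply is_lim_seq_minus'; apply lim_max.
  all: try (destruct HG as [_ [_ L]]; exact L). all: try (intro; apply cdf_le1; auto). all: apply cdf_ge0; auto.
Qed.

Lemma joint_U F G : cdfok F -> cdfok G -> is_joint_pmf (mU F G) F G.
Proof.
  intros HF HG. split. intros x y. unfold mU, pmf_of_cdf2, frechet_upper.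
  apply rect_min; apply cdf_mono; auto; lia.
  split. intro x. apply rowU; auto.
  intro y. apply (is_series_ext (fun x => mU G F y x)). intro; symmetry; apply mU_T. apply rowU; auto.
Qed.

Lemma joint_L F G : cdfok F -> cdfok G -> is_joint_pmf (mL F G) F G.
Proof.
  intros HF HG. split. intros x y. unfold mL, pmf_of_cdf2, frechet_lower.
  apply rect_max; apply cdf_mono; auto; lia.
  split. intro x. apply rowL; auto.
  intro y. apply (is_series_ext (fun x => mL G F y x)). intro; symmetry; apply mL_T. apply rowL; auto.
Qed.

Lemma suppU F G a b : cdfok F -> cdfok G -> mU F G a b <> 0 ->
  F (Z.of_nat a - 1)%Z < G (Z.of_nat b) /\ G (Z.of_nat b - 1)%Z < F (Z.of_nat a).
Proof.
  intros HF HG H. unfold mU, pmf_of_cdf2, frechet_upper in H.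
  assert (F (Z.of_nat a - 1)%Z <= F (Z.of_nat a)) by (apply cdf_mono; auto; lia).
  assert (G (Z.of_nat b - 1)%Z <= G (Z.of_nat b)) by (apply cdf_mono; auto; lia).
  split; apply Rnot_le_lt; intro C; apply H; unfold Rmin; repeat destruct Rle_dec; lra.
Qed.

Lemma suppL F G a b : cdfok F -> cdfok G -> mL F G a b <> 0 ->
  F (Z.of_nat a - 1)%Z + G (Z.of_nat b - 1)%Z < 1 /\ 1 < F (Z.of_nat a) + G (Z.of_nat b).
Proof.
  intros HF HG H. unfold mL, pmf_of_cdf2, frechet_lower in H.
  assert (F (Z.of_nat a - 1)%Z <= F (Z.of_nat a)) by (apply cdf_mono; auto; lia).
  assert (G (Z.of_nat b - 1)%Z <= G (Z.of_nat b)) by (apply cdf_mono; auto; lia).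
  split; apply Rnot_le_lt; intro C; apply H; unfold Rmax; repeat destruct Rle_dec; lra.
Qed.

Lemma tau_upper_bound F G h : cdfok F -> cdfok G -> is_joint_pmf h F G -> kendall_tau_A h <= kendall_tau_A (mU F G).
Proof.
  intros HF HG J. apply (tau_mono F G); auto. apply joint_U; auto.
  intros A B. rewrite Hc_U; auto. unfold Rmin; destruct Rle_dec.
  apply (Hc_le_F h F G); auto. apply (Hc_le_G h F G); auto.
Qed.

Lemma tau_lower_bound F G h : cdfok F -> cdfok G -> is_joint_pmf h F G -> kendall_tau_A (mL F G) <= kendall_tau_A h.
Proof.
  intros HF HG J. apply (tau_mono F G); auto. apply joint_L; auto.
  intros A B. rewrite Hc_L; auto. unfold Rmax; destruct Rle_dec.
  apply Hc_ge0. apply (joint_pm h F G); auto. apply (Hc_ge h F G); auto.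
Qed.

Lemma prob2_ext h E1 E2 : (forall a b c d, E1 a b c d = E2 a b c d) -> prob2 h E1 = prob2 h E2.
Proof. intro H. rewrite !prob2_P2. apply P2_ext. intros; rewrite H; reflexivity. Qed.

Lemma prob2_ext_supp h E1 E2 : (forall a b c d, h a b <> 0 -> h c d <> 0 -> E1 a b c d = E2 a b c d) ->
  prob2 h E1 = prob2 h E2.
Proof. intro H. rewrite !prob2_P2. apply P2_ext_supp. intros; rewrite H; auto. Qed.

Lemma prob2_union h E1 E2 : pm h -> (forall a b c d, E1 a b c d && E2 a b c d = false) ->
  prob2 h (fun a b c d => E1 a b c d || E2 a b c d) = prob2 h E1 + prob2 h E2.
Proof.
  intros Hh H. rewrite !prob2_P2. rewrite <- (P2_plus h h _ _ 1 1); auto.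
  apply P2_ext. intros. specialize (H a b c d). destruct (E1 a b c d), (E2 a b c d); simpl in *; try discriminate; ring.
  all: intros; apply indb_bnd.
Qed.

Lemma prob2_ge0 h E : pm h -> 0 <= prob2 h E.
Proof. intro Hh. rewrite prob2_P2. apply (P2_ge0 h h _ 1); auto. intros; apply indb_bnd. Qed.

Lemma prob2_le h E1 E2 : pm h -> (forall a b c d, E1 a b c d = true -> E2 a b c d = true) -> prob2 h E1 <= prob2 h E2.
Proof.
  intros Hh H. rewrite !prob2_P2. apply (P2_le h h _ _ 1); auto.
  intros. specialize (H a b c d). revert H. destruct (E1 a b c d), (E2 a b c d); simpl; intro H; try lra.
  all: try (specialize (H eq_refl); discriminate).
  intros; apply indb_bnd.
Qed.

Lemma prob2_false h : prob2 h (fun _ _ _ _ => false) = 0.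
Proof. rewrite prob2_P2. replace 0 with (0 * P2 h h (fun _ _ _ _ => 1)) by ring.
  rewrite <- P2_scal. apply P2_ext. intros; simpl; ring. Qed.

Lemma prob2_true h : pm h -> prob2 h (fun _ _ _ _ => true) = 1.
Proof. intro Hh. rewrite prob2_P2. rewrite <- (P2_one h h); auto. Qed.

Lemma partition_pt a b c d : (concordant a b c d || discordant a b c d || tie a b c d) = true /\
  concordant a b c d && discordant a b c d = false /\ (concordant a b c d || discordant a b c d) && tie a b c d = false.
Proof.
  rewrite conc_val, disc_val. unfold tie.
  destruct (Nat.ltb_spec a c); destruct (Nat.ltb_spec c a); destruct (Nat.ltb_spec b d); destruct (Nat.ltb_spec d b);
  destruct (Nat.eqb_spec a c); destruct (Nat.eqb_spec b d); simpl; try lia; auto.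
Qed.

Lemma tau_partition h : pm h -> prob2 h concordant + prob2 h discordant + prob2 h tie = 1.
Proof.
  intro Hh. rewrite <- (prob2_true h Hh).
  rewrite <- prob2_union; auto. rewrite <- prob2_union; auto.
  apply prob2_ext. intros; apply partition_pt.
  intros; apply partition_pt. intros; apply partition_pt.
Qed.

Lemma mass_false h : mass h (fun _ _ => false) = 0.
Proof. unfold mass. simpl. transitivity (Series (fun _ : nat => 0)). apply Series_ext; intro x.
  transitivity (Series (fun _ : nat => 0)). apply Series_ext; intro; ring.
  all: apply is_series_unique; pose proof (ser_fin (fun _ : nat => 0) 0) as H0; rewrite sum0 in H0; apply H0; auto.
Qed.

Lemma mass_ext h A B : (forall x y, A x y = B x y) -> mass h A = mass h B.
Proof. intro H. apply mass_ext_supp. intros; auto. Qed.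

Lemma mass_compl h A : pm h -> mass h A + mass h (fun x y => negb (A x y)) = 1.
Proof.
  intro Hh. rewrite mass_plus; auto. rewrite (mass_ext h (fun x y => A x y || negb (A x y)) (fun _ _ => true)). rewrite (mass_ext h (fun x y => A x y && negb (A x y)) (fun _ _ => false)).
  rewrite mass_true, mass_false; auto. ring.
  intros; destruct (A x y); reflexivity. intros; destruct (A x y); reflexivity.
Qed.

Lemma mass_point h n k : mass h (fun x y => Nat.eqb y k && Nat.eqb x n) = h n k.
Proof.
  unfold mass. rewrite <- (Ser_single (h n k) n). apply Series_ext; intro x.
  destruct (Nat.eqb_spec x n). subst. rewrite <- (Ser_single (h n k) k). apply Series_ext; intro y.
  rewrite andb_true_r. destruct (Nat.eqb_spec y k); simpl; subst; ring.
  transitivity (Series (fun _ : nat => 0)). apply Series_ext; intro y. rewrite andb_false_r; simpl; ring.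
  apply is_series_unique; pose proof (ser_fin (fun _ : nat => 0) 0) as H0; rewrite sum0 in H0; apply H0; auto.
Qed.

Lemma mass_rowpos h F G n : is_joint_pmf h F G -> cdfok F -> cdfok G ->
  mass h (fun x y => Nat.ltb 0 y && Nat.eqb x n) = fX F n - h n 0%nat.
Proof.
  intros J HF HG. assert (Hh := joint_pm h F G HF HG J).
  transitivity (Series (fun x => if Nat.eqb x n then Series (h n) - h n 0%nat else 0)).
  - unfold mass. apply Series_ext; intro x. destruct (Nat.eqb_spec x n).
    + subst x. rewrite (Series_incr_1 (h n)) by (destruct Hh as [_ [E _]]; apply E).
      rewrite Series_incr_1_aux by (simpl; ring).
      rewrite (Series_ext (fun k => indb ((0 <? S k) && true) * h n (S k)) (fun k => h n (S k))) by (intro; simpl; ring).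
      ring.
    + transitivity (Series (fun _ : nat => 0)). apply Series_ext; intro y. rewrite andb_false_r. simpl; ring.
      apply is_series_unique; pose proof (ser_fin (fun _ : nat => 0) 0) as H0; rewrite sum0 in H0; apply H0; auto.
  - rewrite Ser_single. rewrite (rowS h F G n J). reflexivity.
Qed.

Lemma mass_T h A : pm h -> mass h A = mass (hT h) (fun x y => A y x).
Proof.
  intro Hh. destruct (ex2 h (fun x y => indb (A x y)) 1 Hh) as [E1 E2]. intros; apply indb_bnd.
  assert (NN : forall x y, 0 <= indb (A x y) * h x y).
  { intros. apply Rmult_le_pos. apply indb_bnd. apply Hh. }
  destruct (fubini2 (fun x y => indb (A x y) * h x y) NN E1 E2) as [_ [_ Eq]].
  unfold mass, hT. rewrite <- Eq. reflexivity.
Qed.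

Lemma mass_col h F G k : is_joint_pmf h F G -> cdfok F -> cdfok G -> mass h (fun x y => Nat.eqb y k) = fX G k.
Proof.
  intros J HF HG. unfold mass. rewrite (massY h F G (fun y => indb (Nat.eqb y k)) 1); auto.
  rewrite <- (Ser_single (fX G k) k). apply Series_ext; intro y. destruct (Nat.eqb_spec y k); simpl; subst; ring.
  intros; apply indb_bnd.
Qed.

Lemma mass_row h F G k : is_joint_pmf h F G -> mass h (fun x y => Nat.eqb x k) = fX F k.
Proof.
  intros J. unfold mass. rewrite (massX h F G (fun x => indb (Nat.eqb x k))); auto.
  rewrite <- (Ser_single (fX F k) k). apply Series_ext; intro y. destruct (Nat.eqb_spec y k); simpl; subst; ring.
Qed.

Lemma mass_colpos h F G n : is_joint_pmf h F G -> cdfok F -> cdfok G ->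
  mass h (fun x y => Nat.ltb 0 x && Nat.eqb y n) = fX G n - h 0%nat n.
Proof.
  intros J HF HG. rewrite mass_T. 2: apply (joint_pm h F G); auto.
  rewrite (mass_rowpos (hT h) G F n); auto. apply joint_T; auto.
Qed.

Lemma S4_T t : (forall a b c d, 0 <= t a b c d) -> EX4 t -> S4 t = S4 (fun a b c d => t b a d c).
Proof.
  intros P [E1 [E2 [E3 E4]]]. unfold S4.
  assert (P1 : forall a b c, 0 <= Series (t a b c)) by (intros; apply ser_ge0; [intro; apply P| apply E1]).
  assert (P2 : forall a b, 0 <= Series (fun c => Series (t a b c))) by (intros; apply ser_ge0; [intro; apply P1| apply E2]).
  destruct (fubini2 (fun a b => Series (fun c => Series (t a b c)))) as [_ [_ Eq]]; auto.
  etransitivity; [symmetry; exact Eq|]. apply Series_ext; intro b. apply Series_ext; intro a.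
  destruct (fubini2 (fun c d => t a b c d)) as [_ [_ Eq']].
  intros; apply P. intro; apply E1. apply E2. symmetry; exact Eq'.
Qed.

Lemma prob2_T h E : pm h -> pm (hT h) -> prob2 (hT h) E = prob2 h (fun a b c d => E b a d c).
Proof.
  intros Hh HhT. rewrite !prob2_P2. unfold P2.
  destruct (exP2 (hT h) (hT h) (fun a b c d => indb (E a b c d)) 1) as [EX P]; auto. intros; apply indb_bnd.
  rewrite S4_T; auto. all: try (apply S4_ext; intros; unfold T2, hT; reflexivity).
Qed.

Lemma tau_T h F G : cdfok F -> cdfok G -> is_joint_pmf h F G -> kendall_tau_A (hT h) = kendall_tau_A h.
Proof.
  intros HF HG J. assert (Hh := joint_pm h F G HF HG J). assert (HhT := joint_pm (hT h) G F HG HF (joint_T h F G J)).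
  unfold kendall_tau_A. rewrite !prob2_T; auto. f_equal; apply prob2_ext; intros; unfold concordant, discordant;
  rewrite Z.mul_comm; reflexivity.
Qed.

Lemma ctp_T h F G : cdfok F -> cdfok G -> is_joint_pmf h F G -> cond_tie_prob (hT h) = cond_tie_prob h.
Proof.
  intros HF HG J. assert (Hh := joint_pm h F G HF HG J). assert (HhT := joint_pm (hT h) G F HG HF (joint_T h F G J)).
  unfold cond_tie_prob. rewrite !prob2_T; auto. cbv beta.
  rewrite (prob2_ext h (fun a b c d => both_pos b a d c && tie b a d c) (fun a b c d => both_pos a b c d && tie a b c d)).
  rewrite (prob2_ext h (fun a b c d => both_pos b a d c) both_pos). reflexivity.
  intros; unfold both_pos, tie. destruct (0 <? a)%nat, (0 <? b)%nat, (0 <? c)%nat, (0 <? d)%nat; reflexivity.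
  intros; unfold both_pos, tie.
  destruct (0 <? a)%nat, (0 <? b)%nat, (0 <? c)%nat, (0 <? d)%nat, (a =? c)%nat, (b =? d)%nat; reflexivity.
Qed.

Lemma boolU a b c d n : (a = 0 -> b = 0)%nat -> (b = 0 -> a <= n)%nat -> (0 < b -> n <= a)%nat ->
  (c = 0 -> d = 0)%nat -> (d = 0 -> c <= n)%nat -> (0 < d -> n <= c)%nat -> (1 <= n)%nat ->
  negb (both_pos a b c d) && tie a b c d =
  ((Nat.eqb b 0 && Nat.eqb d 0) || ((Nat.eqb b 0 && Nat.eqb a n) && (Nat.ltb 0 d && Nat.eqb c n)))
   || ((Nat.ltb 0 b && Nat.eqb a n) && (Nat.eqb d 0 && Nat.eqb c n)).
Proof.
  intros. unfold both_pos, tie.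
  destruct (Nat.ltb_spec 0 a); destruct (Nat.ltb_spec 0 b); destruct (Nat.ltb_spec 0 c); destruct (Nat.ltb_spec 0 d);
  destruct (Nat.eqb_spec a c); destruct (Nat.eqb_spec b d); destruct (Nat.eqb_spec b 0); destruct (Nat.eqb_spec d 0);
  destruct (Nat.eqb_spec a n); destruct (Nat.eqb_spec c n); simpl; try reflexivity; exfalso; lia.
Qed.

Lemma prob2_union3 h E1 E2 E3 : pm h ->
  (forall a b c d, E1 a b c d && E2 a b c d = false) ->
  (forall a b c d, E1 a b c d && E3 a b c d = false) ->
  (forall a b c d, E2 a b c d && E3 a b c d = false) ->
  prob2 h (fun a b c d => (E1 a b c d || E2 a b c d) || E3 a b c d) = prob2 h E1 + prob2 h E2 + prob2 h E3.
Proof.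
  intros Hh D12 D13 D23. rewrite prob2_union; auto. rewrite prob2_union; auto.
  intros. specialize (D13 a b c d). specialize (D23 a b c d).
  destruct (E1 a b c d), (E2 a b c d), (E3 a b c d); simpl in *; auto.
Qed.

Lemma ctp_eq h v : pm h -> prob2 h both_pos = v ^ 2 ->
  v ^ 2 * cond_tie_prob h = prob2 h (fun a b c d => both_pos a b c d && tie a b c d).
Proof.
  intros Hh E. unfold cond_tie_prob. rewrite E.
  destruct (Req_dec (v ^ 2) 0) as [Z|Z].
  - rewrite Z. assert (L := prob2_le h (fun a b c d => both_pos a b c d && tie a b c d) both_pos Hh).
    rewrite E, Z in L. assert (G0 := prob2_ge0 h (fun a b c d => both_pos a b c d && tie a b c d) Hh).
    assert (L' : prob2 h (fun a b c d => both_pos a b c d && tie a b c d) <= 0).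
    { apply L. intros a b c d H. destruct (both_pos a b c d); auto. }
    lra.
  - unfold Rdiv. rewrite Rmult_comm, Rmult_assoc, Rinv_l by exact Z. ring.
Qed.

Lemma bp_prod h : prob2 h both_pos = mass h (fun x y => Nat.ltb 0 x && Nat.ltb 0 y) ^ 2.
Proof.
  replace (mass h (fun x y => Nat.ltb 0 x && Nat.ltb 0 y) ^ 2) with
    (mass h (fun x y => Nat.ltb 0 x && Nat.ltb 0 y) * mass h (fun x y => Nat.ltb 0 x && Nat.ltb 0 y)) by ring.
  rewrite <- (prob2_prod h). apply prob2_ext. intros. unfold both_pos.
  destruct (0 <? a)%nat, (0 <? b)%nat, (0 <? c)%nat, (0 <? d)%nat; reflexivity.
Qed.

Lemma tauU1 F G s : cdfok F -> cdfok G -> F 0%Z <= G 0%Z -> F s > G 0%Z -> F (s - 1)%Z <= G 0%Z ->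
  kendall_tau_A (mU F G) = (1 - G 0%Z ^ 2) - (1 - G 0%Z) ^ 2 * cond_tie_prob (mU F G)
     - 2 * (G 0%Z - F (s - 1)%Z) * (F s - G 0%Z).
Proof.
  intros HF HG H12 Hs1 Hs2.
  set (m := mU F G). assert (J : is_joint_pmf m F G) by (apply joint_U; auto).
  assert (Hm : pm m) by (apply (joint_pm m F G); auto).
  assert (s1 : (1 <= s)%Z).
  { destruct (Z_lt_le_dec s 1); auto. assert (F s <= F 0%Z) by (apply cdf_mono; auto; lia). lra. }
  set (n := Z.to_nat s). assert (Hn : s = Z.of_nat n) by (unfold n; rewrite Z2Nat.id; lia).
  assert (n1 : (1 <= n)%nat) by lia.
  assert (SU : forall a b, m a b <> 0 -> (a = 0 -> b = 0)%nat /\ (b = 0 -> a <= n)%nat /\ (0 < b -> n <= a)%nat).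
  { intros a b Hab. destruct (suppU F G a b HF HG Hab) as [S1 S2]. split; [|split]; intro Hc.
    - destruct (Nat.eq_dec b 0); auto. exfalso. subst a. simpl in S2.
      assert (G 0%Z <= G (Z.of_nat b - 1)%Z) by (apply cdf_mono; auto; lia). lra.
    - destruct (le_lt_dec a n); auto. exfalso. subst b. simpl in S1.
      assert (F s <= F (Z.of_nat a - 1)%Z) by (apply cdf_mono; auto; lia). lra.
    - destruct (le_lt_dec n a); auto. exfalso.
      assert (F (Z.of_nat a) <= F (s - 1)%Z) by (apply cdf_mono; auto; lia).
      assert (G 0%Z <= G (Z.of_nat b - 1)%Z) by (apply cdf_mono; auto; lia). lra. }
  assert (PD : prob2 m discordant = 0).
  { rewrite <- (prob2_false m). apply prob2_ext_supp. intros a b c d Hab Hcd.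
    destruct (suppU F G a b HF HG Hab) as [A1 A2]. destruct (suppU F G c d HF HG Hcd) as [C1 C2].
    rewrite disc_val. destruct (Nat.ltb_spec a c); destruct (Nat.ltb_spec d b); destruct (Nat.ltb_spec c a);
    destruct (Nat.ltb_spec b d); simpl; auto; exfalso; try lia.
    - assert (F (Z.of_nat a) <= F (Z.of_nat c - 1)%Z) by (apply cdf_mono; auto; lia).
      assert (G (Z.of_nat d) <= G (Z.of_nat b - 1)%Z) by (apply cdf_mono; auto; lia). lra.
    - assert (F (Z.of_nat c) <= F (Z.of_nat a - 1)%Z) by (apply cdf_mono; auto; lia).
      assert (G (Z.of_nat b) <= G (Z.of_nat d - 1)%Z) by (apply cdf_mono; auto; lia). lra. }
  assert (PT := tau_partition m Hm).
  assert (Tsplit : prob2 m tie = prob2 m (fun a b c d => both_pos a b c d && tie a b c d)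
                      + prob2 m (fun a b c d => negb (both_pos a b c d) && tie a b c d)).
  { rewrite <- prob2_union; auto. apply prob2_ext. intros. destruct (both_pos a b c d), (tie a b c d); reflexivity.
    intros. destruct (both_pos a b c d), (tie a b c d); reflexivity. }
  set (A2 := fun x y => Nat.eqb y 0 && Nat.eqb x n).
  set (B2 := fun x y => Nat.ltb 0 y && Nat.eqb x n).
  set (Z0 := fun x y : nat => Nat.eqb y 0).
  assert (Nbp : prob2 m (fun a b c d => negb (both_pos a b c d) && tie a b c d) =
     mass m Z0 * mass m Z0 + mass m A2 * mass m B2 + mass m B2 * mass m A2).
  { rewrite <- !prob2_prod.
    rewrite <- prob2_union3; auto.
    - apply prob2_ext_supp. intros a b c d Hab Hcd.
      destruct (SU a b Hab) as [X1 [X2 X3]]. destruct (SU c d Hcd) as [Y1 [Y2 Y3]].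
      rewrite (boolU a b c d n); auto.
    - intros. unfold Z0, A2, B2. destruct (Nat.eqb_spec b 0); destruct (Nat.eqb_spec d 0); destruct (Nat.ltb_spec 0 d);
      destruct (Nat.ltb_spec 0 b); simpl; rewrite ?andb_false_r; auto; lia.
    - intros. unfold Z0, A2, B2. destruct (Nat.eqb_spec b 0); destruct (Nat.eqb_spec d 0); destruct (Nat.ltb_spec 0 d);
      destruct (Nat.ltb_spec 0 b); simpl; rewrite ?andb_false_r; auto; lia.
    - intros. unfold Z0, A2, B2. destruct (Nat.eqb_spec b 0); destruct (Nat.eqb_spec d 0); destruct (Nat.ltb_spec 0 d);
      destruct (Nat.ltb_spec 0 b); simpl; rewrite ?andb_false_r; auto; lia. }
  assert (MZ : mass m Z0 = (G 0%Z)).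
  { unfold Z0. rewrite (mass_col m F G 0); auto. unfold fX. simpl. rewrite (cdf_neg G (-1)); auto. ring. lia. }
  assert (MA : mass m A2 = (G 0%Z) - F (s - 1)%Z).
  { unfold A2. rewrite mass_point. unfold m, mU, pmf_of_cdf2, frechet_upper. cbv zeta. rewrite <- Hn. simpl.
    rewrite (cdf_neg G (-1)) by (auto; lia).
    pose proof (cdf_ge0 F s HF). pose proof (cdf_ge0 F (s-1) HF).
    unfold Rmin; repeat destruct Rle_dec; lra. }
  assert (MB : mass m B2 = F s - (G 0%Z)).
  { unfold B2. rewrite (mass_rowpos m F G n); auto. rewrite <- (mass_point m n 0).
    fold A2. rewrite MA. unfold fX. rewrite <- Hn. ring. }
  assert (MBP : mass m (fun x y => Nat.ltb 0 x && Nat.ltb 0 y) = 1 - (G 0%Z)).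
  { rewrite <- MZ. rewrite <- (mass_compl m Z0 Hm).
    rewrite (mass_ext_supp m _ (fun x y => negb (Z0 x y))). ring.
    intros x y Hxy. destruct (SU x y Hxy) as [X1 _]. unfold Z0.
    destruct (Nat.ltb_spec 0 x); destruct (Nat.ltb_spec 0 y); destruct (Nat.eqb_spec y 0); simpl; auto; lia. }
  assert (CT := ctp_eq m (1 - (G 0%Z)) Hm). rewrite bp_prod, MBP in CT. specialize (CT eq_refl).
  unfold kendall_tau_A. rewrite CT.
  rewrite MZ, MA, MB in Nbp. rewrite Tsplit in PT. rewrite Nbp in PT. rewrite PD in *. simpl. nra.
Qed.

Lemma conc_zero_L F G : cdfok F -> cdfok G -> prob2 (mL F G) concordant = 0.
Proof.
  intros HF HG. rewrite <- (prob2_false (mL F G)). apply prob2_ext_supp. intros a b c d Hab Hcd.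
  destruct (suppL F G a b HF HG Hab) as [A1 A2]. destruct (suppL F G c d HF HG Hcd) as [C1 C2].
  rewrite conc_val. destruct (Nat.ltb_spec a c); destruct (Nat.ltb_spec b d); destruct (Nat.ltb_spec c a);
  destruct (Nat.ltb_spec d b); simpl; auto; exfalso; try lia.
  - assert (F (Z.of_nat a) <= F (Z.of_nat c - 1)%Z) by (apply cdf_mono; auto; lia).
    assert (G (Z.of_nat b) <= G (Z.of_nat d - 1)%Z) by (apply cdf_mono; auto; lia). lra.
  - assert (F (Z.of_nat c) <= F (Z.of_nat a - 1)%Z) by (apply cdf_mono; auto; lia).
    assert (G (Z.of_nat d) <= G (Z.of_nat b - 1)%Z) by (apply cdf_mono; auto; lia). lra.
Qed.

Lemma mL00 F G : cdfok F -> cdfok G -> mL F G 0 0 = Rmax (F 0%Z + G 0%Z - 1) 0.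
Proof.
  intros HF HG. unfold mL, pmf_of_cdf2, frechet_lower. cbv zeta. simpl.
  rewrite (cdf_neg F (-1)) by (auto; lia). rewrite (cdf_neg G (-1)) by (auto; lia).
  pose proof (cdf_le1 F 0 HF). pose proof (cdf_le1 G 0 HG).
  unfold Rmax; repeat destruct Rle_dec; lra.
Qed.

Lemma boolL1 a b c d : (a = 0 \/ b = 0)%nat -> (c = 0 \/ d = 0)%nat ->
  discordant a b c d = ((Nat.eqb a 0 && Nat.ltb 0 b) && (Nat.ltb 0 c && Nat.eqb d 0))
                     || ((Nat.ltb 0 a && Nat.eqb b 0) && (Nat.eqb c 0 && Nat.ltb 0 d)).
Proof.
  intros. rewrite disc_val.
  destruct (Nat.ltb_spec a c); destruct (Nat.ltb_spec b d); destruct (Nat.ltb_spec c a); destruct (Nat.ltb_spec d b);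
  destruct (Nat.eqb_spec a 0); destruct (Nat.eqb_spec b 0); destruct (Nat.eqb_spec c 0); destruct (Nat.eqb_spec d 0);
  destruct (Nat.ltb_spec 0 a); destruct (Nat.ltb_spec 0 b); destruct (Nat.ltb_spec 0 c); destruct (Nat.ltb_spec 0 d);
  simpl; try reflexivity; exfalso; lia.
Qed.

Lemma tauL1 F G : cdfok F -> cdfok G -> 1 - F 0%Z - G 0%Z < 0 ->
  kendall_tau_A (mL F G) = - 2 * (1 - F 0%Z) * (1 - G 0%Z).
Proof.
  intros HF HG H.
  set (w := mL F G). assert (J : is_joint_pmf w F G) by (apply joint_L; auto).
  assert (Hw : pm w) by (apply (joint_pm w F G); auto).
  assert (SL : forall a b, w a b <> 0 -> (a = 0 \/ b = 0)%nat).
  { intros a b Hab. destruct (suppL F G a b HF HG Hab) as [S1 S2].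
    destruct (Nat.eq_dec a 0); auto. destruct (Nat.eq_dec b 0); auto. exfalso.
    assert (F 0%Z <= F (Z.of_nat a - 1)%Z) by (apply cdf_mono; auto; lia).
    assert (G 0%Z <= G (Z.of_nat b - 1)%Z) by (apply cdf_mono; auto; lia). lra. }
  set (A := fun x y => Nat.eqb x 0 && Nat.ltb 0 y).
  set (B := fun x y => Nat.ltb 0 x && Nat.eqb y 0).
  assert (PD : prob2 w discordant = mass w A * mass w B + mass w B * mass w A).
  { rewrite <- !prob2_prod. rewrite <- prob2_union; auto.
    apply prob2_ext_supp. intros a b c d Hab Hcd. rewrite boolL1; auto.
    intros. unfold A, B. destruct (Nat.eqb_spec a 0); destruct (Nat.ltb_spec 0 a); simpl; auto; lia. }
  assert (w00 : w 0%nat 0%nat = F 0%Z + G 0%Z - 1).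
  { unfold w. rewrite mL00; auto. unfold Rmax; destruct Rle_dec; lra. }
  assert (MA : mass w A = 1 - G 0%Z).
  { rewrite (mass_ext w A (fun x y => Nat.ltb 0 y && Nat.eqb x 0)).
    rewrite (mass_rowpos w F G 0); auto. rewrite w00. unfold fX. simpl.
    rewrite (cdf_neg F (-1)) by (auto; lia). ring.
    intros; unfold A; apply andb_comm. }
  assert (MB : mass w B = 1 - F 0%Z).
  { unfold B. rewrite (mass_colpos w F G 0); auto. rewrite w00. unfold fX. simpl.
    rewrite (cdf_neg G (-1)) by (auto; lia). ring. }
  unfold kendall_tau_A. assert (C0 := conc_zero_L F G HF HG). fold w in C0. rewrite C0, PD, MA, MB. ring.
Qed.

Ltac bdestr := repeat match goal with
  | |- context [Nat.ltb ?x ?y] => destruct (Nat.ltb_spec x y)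
  | |- context [Nat.eqb ?x ?y] => destruct (Nat.eqb_spec x y)
  end.

Section L2sec.
Definition Zb (x y : nat) := negb (Nat.ltb 0 y) && Nat.ltb 0 x.
Definition Xb (x y : nat) := negb (Nat.ltb 0 x) && Nat.ltb 0 y.
Definition Pn n (x y : nat) := negb (Nat.ltb 0 y) && Nat.eqb x n.
Definition Qn n (x y : nat) := Nat.ltb 0 y && Nat.eqb x n.
Definition Pk k (x y : nat) := negb (Nat.ltb 0 x) && Nat.eqb y k.
Definition Qk k (x y : nat) := Nat.ltb 0 x && Nat.eqb y k.
End L2sec.

Definition EL2a n (a b c d : nat) := (Zb a b && Zb c d || Xb a b && Xb c d) || Pn n a b && Qn n c d.
Definition EL2b n k (a b c d : nat) := (Qn n a b && Pn n c d || Pk k a b && Qk k c d) || Qk k a b && Pk k c d.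

Lemma boolL2 a b c d n k : (1 <= n)%nat -> (1 <= k)%nat ->
  ~ (a = 0 /\ b = 0)%nat -> (b = 0 -> n <= a)%nat -> (a = 0 -> k <= b)%nat -> (0 < a -> 0 < b -> a <= n)%nat -> (0 < a -> 0 < b -> b <= k)%nat ->
  ~ (c = 0 /\ d = 0)%nat -> (d = 0 -> n <= c)%nat -> (c = 0 -> k <= d)%nat -> (0 < c -> 0 < d -> c <= n)%nat -> (0 < c -> 0 < d -> d <= k)%nat ->
  negb (both_pos a b c d) && tie a b c d = EL2a n a b c d || EL2b n k a b c d.
Proof.
  intros. unfold both_pos, tie, EL2a, EL2b, Zb, Xb, Pn, Qn, Pk, Qk.
  bdestr; simpl; try reflexivity; exfalso; lia.
Qed.

Lemma disjL2 a b c d n k : (1 <= n)%nat -> (1 <= k)%nat ->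
  (Zb a b && Zb c d) && (Xb a b && Xb c d) = false /\
  (Zb a b && Zb c d) && (Pn n a b && Qn n c d) = false /\
  (Xb a b && Xb c d) && (Pn n a b && Qn n c d) = false /\
  (Qn n a b && Pn n c d) && (Pk k a b && Qk k c d) = false /\
  (Qn n a b && Pn n c d) && (Qk k a b && Pk k c d) = false /\
  (Pk k a b && Qk k c d) && (Qk k a b && Pk k c d) = false /\
  EL2a n a b c d && EL2b n k a b c d = false.
Proof.
  intros. unfold EL2a, EL2b, Zb, Xb, Pn, Qn, Pk, Qk.
  bdestr; simpl; try (repeat split; reflexivity); exfalso; lia.
Qed.

Lemma tauL2 F G s' t' : cdfok F -> cdfok G -> 1 - F 0%Z - G 0%Z > 0 ->
  F s' + G 0%Z - 1 > 0 -> F (s' - 1)%Z + G 0%Z - 1 <= 0 ->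
  G t' + F 0%Z - 1 > 0 -> G (t' - 1)%Z + F 0%Z - 1 <= 0 ->
  kendall_tau_A (mL F G) = F 0%Z ^ 2 + G 0%Z ^ 2 - 1 + (1 - F 0%Z - G 0%Z) ^ 2 * cond_tie_prob (mL F G)
     + 2 * ((F s' + G 0%Z - 1) * (1 - G 0%Z - F (s' - 1)%Z) + (G t' + F 0%Z - 1) * (1 - F 0%Z - G (t' - 1)%Z)).
Proof.
  intros HF HG H Hs1 Hs2 Ht1 Ht2.
  set (w := mL F G). assert (J : is_joint_pmf w F G) by (apply joint_L; auto).
  assert (Hw : pm w) by (apply (joint_pm w F G); auto).
  assert (s1 : (1 <= s')%Z).
  { destruct (Z_lt_le_dec s' 1); auto. assert (F s' <= F 0%Z) by (apply cdf_mono; auto; lia). lra. }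
  assert (t1 : (1 <= t')%Z).
  { destruct (Z_lt_le_dec t' 1); auto. assert (G t' <= G 0%Z) by (apply cdf_mono; auto; lia). lra. }
  set (n := Z.to_nat s'). assert (Hn : s' = Z.of_nat n) by (unfold n; rewrite Z2Nat.id; lia).
  set (k := Z.to_nat t'). assert (Hk : t' = Z.of_nat k) by (unfold k; rewrite Z2Nat.id; lia).
  assert (n1 : (1 <= n)%nat) by lia. assert (k1 : (1 <= k)%nat) by lia.
  assert (SW : forall a b, w a b <> 0 ->
     ~ (a = 0 /\ b = 0)%nat /\ (b = 0 -> n <= a)%nat /\ (a = 0 -> k <= b)%nat /\
     (0 < a -> 0 < b -> a <= n)%nat /\ (0 < a -> 0 < b -> b <= k)%nat).
  { intros a b Hab. destruct (suppL F G a b HF HG Hab) as [S1 S2]. repeat split.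
    - intros [Ea Eb]. subst a b. simpl in S2. lra.
    - intro Eb. subst b. simpl in S2. destruct (le_lt_dec n a); auto. exfalso.
      assert (F (Z.of_nat a) <= F (s' - 1)%Z) by (apply cdf_mono; auto; lia). lra.
    - intro Ea. subst a. simpl in S2. destruct (le_lt_dec k b); auto. exfalso.
      assert (G (Z.of_nat b) <= G (t' - 1)%Z) by (apply cdf_mono; auto; lia). lra.
    - intros Pa Pb. destruct (le_lt_dec a n); auto. exfalso.
      assert (F s' <= F (Z.of_nat a - 1)%Z) by (apply cdf_mono; auto; lia).
      assert (G 0%Z <= G (Z.of_nat b - 1)%Z) by (apply cdf_mono; auto; lia). lra.
    - intros Pa Pb. destruct (le_lt_dec b k); auto. exfalso.
      assert (G t' <= G (Z.of_nat b - 1)%Z) by (apply cdf_mono; auto; lia).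
      assert (F 0%Z <= F (Z.of_nat a - 1)%Z) by (apply cdf_mono; auto; lia). lra. }
  assert (PT := tau_partition w Hw).
  assert (C0 := conc_zero_L F G HF HG). fold w in C0.
  assert (Tsplit : prob2 w tie = prob2 w (fun a b c d => both_pos a b c d && tie a b c d)
                      + prob2 w (fun a b c d => negb (both_pos a b c d) && tie a b c d)).
  { rewrite <- prob2_union; auto. apply prob2_ext. intros. destruct (both_pos a b c d), (tie a b c d); reflexivity.
    intros. destruct (both_pos a b c d), (tie a b c d); reflexivity. }
  assert (Nbp : prob2 w (fun a b c d => negb (both_pos a b c d) && tie a b c d) =
     (mass w Zb * mass w Zb + mass w Xb * mass w Xb + mass w (Pn n) * mass w (Qn n)) +
     (mass w (Qn n) * mass w (Pn n) + mass w (Pk k) * mass w (Qk k) + mass w (Qk k) * mass w (Pk k))).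
  { rewrite <- !prob2_prod.
    transitivity (prob2 w (fun a b c d => EL2a n a b c d || EL2b n k a b c d)).
    - apply prob2_ext_supp. intros a b c d Hab Hcd.
      destruct (SW a b Hab) as [X1 [X2 [X3 [X4 X5]]]]. destruct (SW c d Hcd) as [Y1 [Y2 [Y3 [Y4 Y5]]]].
      apply boolL2; auto.
    - rewrite prob2_union; auto. unfold EL2a, EL2b. rewrite !prob2_union3; auto.
      all: intros a b c d; destruct (disjL2 a b c d n k n1 k1) as [D1 [D2 [D3 [D4 [D5 [D6 D7]]]]]]; assumption. }
  assert (w00 : w 0%nat 0%nat = 0).
  { unfold w. rewrite mL00; auto. unfold Rmax; destruct Rle_dec; lra. }
  assert (MZ : mass w Zb = G 0%Z).
  { rewrite (mass_ext_supp w Zb (fun x y => Nat.eqb y 0)). rewrite (mass_col w F G 0); auto.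
    unfold fX. simpl. rewrite (cdf_neg G (-1)) by (auto; lia). ring.
    intros x y Hxy. destruct (SW x y Hxy) as [X1 _]. unfold Zb. bdestr; simpl; auto; lia. }
  assert (MX : mass w Xb = F 0%Z).
  { rewrite (mass_ext_supp w Xb (fun x y => Nat.eqb x 0)). rewrite (mass_row w F G 0); auto.
    unfold fX. simpl. rewrite (cdf_neg F (-1)) by (auto; lia). ring.
    intros x y Hxy. destruct (SW x y Hxy) as [X1 _]. unfold Xb. bdestr; simpl; auto; lia. }
  assert (wn0 : w n 0%nat = F s' + G 0%Z - 1).
  { unfold w, mL, pmf_of_cdf2, frechet_lower. cbv zeta. rewrite <- Hn. simpl.
    rewrite (cdf_neg G (-1)) by (auto; lia).
    pose proof (cdf_le1 F s' HF). pose proof (cdf_le1 F (s' - 1) HF).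
    unfold Rmax; repeat destruct Rle_dec; lra. }
  assert (w0k : w 0%nat k = G t' + F 0%Z - 1).
  { unfold w, mL, pmf_of_cdf2, frechet_lower. cbv zeta. rewrite <- Hk. simpl.
    rewrite (cdf_neg F (-1)) by (auto; lia).
    pose proof (cdf_le1 G t' HG). pose proof (cdf_le1 G (t' - 1) HG).
    unfold Rmax; repeat destruct Rle_dec; lra. }
  assert (MPn : mass w (Pn n) = F s' + G 0%Z - 1).
  { rewrite <- wn0, <- (mass_point w n 0). apply mass_ext. intros; unfold Pn. bdestr; simpl; auto; lia. }
  assert (MQn : mass w (Qn n) = 1 - G 0%Z - F (s' - 1)%Z).
  { unfold Qn. rewrite (mass_rowpos w F G n); auto. rewrite wn0. unfold fX. rewrite <- Hn. ring. }
  assert (MPk : mass w (Pk k) = G t' + F 0%Z - 1).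
  { rewrite <- w0k, <- (mass_point w 0 k). apply mass_ext. intros; unfold Pk. bdestr; simpl; auto; lia. }
  assert (MQk : mass w (Qk k) = 1 - F 0%Z - G (t' - 1)%Z).
  { unfold Qk. rewrite (mass_colpos w F G k); auto. rewrite w0k. unfold fX. rewrite <- Hk. ring. }
  assert (MBP : mass w (fun x y => Nat.ltb 0 x && Nat.ltb 0 y) = 1 - F 0%Z - G 0%Z).
  { assert (E1 := mass_plus w (fun x y => Nat.ltb 0 x && Nat.ltb 0 y) Xb Hw). cbv beta in E1.
    rewrite (mass_ext w (fun x y => (Nat.ltb 0 x && Nat.ltb 0 y) && Xb x y) (fun _ _ => false)) in E1.
    rewrite mass_false in E1.
    assert (E2 := mass_compl w (fun x y => (Nat.ltb 0 x && Nat.ltb 0 y) || Xb x y) Hw). cbv beta in E2.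
    rewrite (mass_ext_supp w (fun x y => negb ((Nat.ltb 0 x && Nat.ltb 0 y) || Xb x y)) Zb) in E2.
    lra.
    intros x y Hxy. destruct (SW x y Hxy) as [X1 _]. unfold Zb, Xb. bdestr; simpl; auto; lia.
    intros x y. unfold Xb. bdestr; simpl; auto; lia. }
  assert (CT := ctp_eq w (1 - F 0%Z - G 0%Z) Hw). rewrite bp_prod, MBP in CT. specialize (CT eq_refl).
  unfold kendall_tau_A. rewrite CT.
  rewrite MZ, MX, MPn, MQn, MPk, MQk in Nbp. rewrite Tsplit, Nbp, C0 in PT. rewrite C0. nra.
Qed.

Lemma tauU2 F G t : cdfok F -> cdfok G -> G 0%Z <= F 0%Z -> G t > F 0%Z -> G (t - 1)%Z <= F 0%Z ->
  kendall_tau_A (mU F G) = (1 - F 0%Z ^ 2) - (1 - F 0%Z) ^ 2 * cond_tie_prob (mU F G)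
     - 2 * (F 0%Z - G (t - 1)%Z) * (G t - F 0%Z).
Proof.
  intros HF HG H1 H2 H3.
  assert (E : mU F G = hT (mU G F)).
  { apply functional_extensionality; intro x. apply functional_extensionality; intro y.
    unfold hT. apply mU_T. }
  assert (J : is_joint_pmf (mU G F) G F) by (apply joint_U; auto).
  rewrite E. rewrite (tau_T (mU G F) G F); auto. rewrite (ctp_T (mU G F) G F); auto.
  apply tauU1; auto.
Qed.

Lemma zi_ok pi f : 0 <= pi <= 1 -> is_pmf f -> cdfok (zi_cdf pi (cdf_of_pmf f)).
Proof.
  intros Hpi [Hf0 Hf1].
  assert (Hc : forall s, (0 <= s)%Z -> zi_cdf pi (cdf_of_pmf f) s = (1 - pi) + pi * sum_n f (Z.to_nat s)).
  { intros s Hs. unfold zi_cdf, cdf_of_pmf. destruct (Z.ltb_spec s 0). lia. reflexivity. }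
  assert (Hneg : forall s, (s < 0)%Z -> zi_cdf pi (cdf_of_pmf f) s = 0).
  { intros s Hs. unfold zi_cdf. destruct (Z.ltb_spec s 0). reflexivity. lia. }
  split; [|split].
  - exact Hneg.
  - intros s t Hst. destruct (Z_lt_le_dec s 0).
    + rewrite Hneg by auto. destruct (Z_lt_le_dec t 0). rewrite Hneg by auto; lra.
      rewrite Hc by auto. pose proof (sum_nonneg f (Z.to_nat t) Hf0). nra.
    + rewrite !Hc by lia. pose proof (sum_mono f (Z.to_nat s) (Z.to_nat t) Hf0 ltac:(lia)). nra.
  - apply is_lim_seq_ext with (fun n => (1 - pi) + pi * sum_n f n).
    intro n. rewrite Hc by lia. rewrite Nat2Z.id. reflexivity.
    replace (Finite 1) with (Finite ((1 - pi) + pi * 1)) by (f_equal; ring).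
    apply is_lim_seq_plus'. apply is_lim_seq_const.
    assert (X := is_lim_seq_scal_l _ pi 1 (proj1 (ser_lim f 1) Hf1)). simpl in X. exact X.
Qed.

Theorem proposition1 (piF piG : R) (fbar gbar : nat -> R) :
  0 <= piF <= 1 -> 0 <= piG <= 1 -> is_pmf fbar -> is_pmf gbar ->
  let F := zi_cdf piF (cdf_of_pmf fbar) in
  let G := zi_cdf piG (cdf_of_pmf gbar) in
  let p1 := F 0%Z in
  let p2 := G 0%Z in
  let pU := cond_tie_prob (pmf_of_cdf2 (frechet_upper F G)) in
  let pL := cond_tie_prob (pmf_of_cdf2 (frechet_lower F G)) in
  (p1 <= p2 ->
     forall s : Z, F s > p2 -> F (s - 1)%Z <= p2 ->
     tau_A_max F G ((1 - p2 ^ 2) - (1 - p2) ^ 2 * pU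
                    - 2 * (p2 - F (s - 1)%Z) * (F s - p2))) /\
  (p1 >= p2 ->
     forall t : Z, G t > p1 -> G (t - 1)%Z <= p1 ->
     tau_A_max F G ((1 - p1 ^ 2) - (1 - p1) ^ 2 * pU
                    - 2 * (p1 - G (t - 1)%Z) * (G t - p1))) /\
  (1 - p1 - p2 < 0 ->
     tau_A_min F G (- 2 * (1 - p1) * (1 - p2))) /\
  (1 - p1 - p2 > 0 ->
     forall s' t' : Z,
     F s' + p2 - 1 > 0 -> F (s' - 1)%Z + p2 - 1 <= 0 ->
     G t' + p1 - 1 > 0 -> G (t' - 1)%Z + p1 - 1 <= 0 ->
     tau_A_min F G (p1 ^ 2 + p2 ^ 2 - 1 + (1 - p1 - p2) ^ 2 * pL
        + 2 * ((F s' + p2 - 1) * (1 - p2 - F (s' - 1)%Z)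
               + (G t' + p1 - 1) * (1 - p1 - G (t' - 1)%Z)))).
Proof.
  intros HpiF HpiG Hf Hg F G p1 p2 pU pL.
  assert (HF : cdfok F) by (apply zi_ok; auto).
  assert (HG : cdfok G) by (apply zi_ok; auto).
  split; [|split; [|split]].
  - intros H12 s Hs1 Hs2.
    assert (E := tauU1 F G s HF HG H12 Hs1 Hs2).
    split.
    + intros h Jh. eapply Rle_trans. apply (tau_upper_bound F G h); auto. right. exact E.
    + exists (mU F G). split. apply joint_U; auto. exact E.
  - intros H21 t Ht1 Ht2.
    assert (E := tauU2 F G t HF HG (Rge_le _ _ H21) Ht1 Ht2).
    split.
    + intros h Jh. eapply Rle_trans. apply (tau_upper_bound F G h); auto. right. exact E.
    + exists (mU F G). split. apply joint_U; auto. exact E.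
  - intros H.
    assert (E := tauL1 F G HF HG H).
    split.
    + intros h Jh. eapply Rle_trans. right. symmetry. exact E. apply (tau_lower_bound F G h); auto.
    + exists (mL F G). split. apply joint_L; auto. exact E.
  - intros H s' t' H1 H2 H3 H4.
    assert (E := tauL2 F G s' t' HF HG H H1 H2 H3 H4).
    split.
    + intros h Jh. eapply Rle_trans. right. symmetry. exact E. apply (tau_lower_bound F G h); auto.
    + exists (mL F G). split. apply joint_L; auto. exact E.
Qed.
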